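(* Let $(\mathcal R,\tau)$ be a t-minimal Hausdorff geometric structure and $\mathcal S$ a lore of $(\mathcal R,\tau)$. (1) If $X$ is a loric $m$-manifold and $Y$ is a loric $n$-manifold, then $X\times Y$ is a loric $(m+n)$-manifold. (2) If $X$ and $Y$ are lorically homeomorphic and $X$ is a loric $n$-manifold, then so is $Y$. (3) Any definable open subset of a loric $n$-manifold is a loric $n$-manifold.
   Context: A structure $\mathcal R$ is geometric if $\operatorname{acl}$ satisfies exchange and $\mathcal R$ eliminates $\exists^\infty$; $\dim$ denotes acl-dimension, and $a\in X$ is generic over $A$ if $\dim(a/A)=\dim(X)$. ''Definable'' allows parameters. Given a topology $\tau$ on $R$ (extended to definable subsets of $R^n$ by product and subspace topologies), $(\mathcal R,\tau)$ is a Hausdorff geometric structure if: (1) $\tau$ is Hausdorff; (2) $\mathcal R$ is geometric and $\aleph_1$-saturated; (3) if $X\subset R^n$ is $A$-definable and $a\in\overline{\overline X-X}$ then $\dim(a/A)<\dim(X)$; (4) if $X$ is definable over a countable $A$, $a\in X$ generic over $A$, and $B\supseteq A$ countable, every neighborhood of $a$ contains a generic of $X$ over $B$; (5) if $X,Y$, $Z\subset X\times Y$ are $A$-definable of the same dimension with both projections of $Z$ finite-to-one and $(x,y)\in Z$ generic over $A$, then $Z$ restricted to some $U\times V$ ($U\ni x$, $V\ni y$ open) is the graph of a homeomorphism $U\to V$. It is t-minimal if moreover $\tau$ has a basis given by the instances of a parameter-free formula, and $R$ has no isolated points. A lore is a collection $\mathcal S$ of definable sets (''loric sets'') such that: (i)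 $R$ and the diagonal of $R^2$ are loric, and loric sets are closed under finite products, finite intersections, coordinate permutations; (ii) if $f:X\to Y$ is a definable homeomorphism with $X$ and the graph of $f$ loric, then $Y$ is loric; (iii) definable open subsets of loric sets are loric, and a definable set with an open cover by loric sets is loric; (iv) every nonempty $A$-definable $X$ has a relatively open $A$-definable loric subset $X'$ with $\dim(X-X')<\dim(X)$. A loric map is a continuous function with loric graph; a loric homeomorphism is a loric map that is a homeomorphism; $X,Y$ are lorically homeomorphic if there is a loric homeomorphism $X\to Y$. For definable $X$ with $\dim(X)=n$, $x\in X$ is a loric manifold point if some definable relatively open $U$ with $x\in U\subset X$ is lorically homeomorphic to an open subset of $R^n$; $X^{lman}$ is the set of such points. A loric $n$-manifold is a definable set $Y$ with $\dim(Y)=n$ and $Y^{lman}=Y$. *)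

(* Defs.v *)
From HB Require Import structures.
From mathcomp Require Import all_boot fingroup perm.
From mathcomp Require Import boolp classical_sets cardinality topology.

Set Implicit Arguments.
Unset Strict Implicit.
Unset Printing Implicit Defensive.

Local Open Scope classical_set_scope.

Notation tup R n := ('I_n -> R).

Definition cat_t {R : Type} {m n : nat} (x : tup R m) (y : tup R n) : tup R (m + n) :=
  fun i => match split i with inl j => x j | inr j => y j end.

Definition setXt {R : Type} {m n : nat} (X : set (tup R m)) (Y : set (tup R n))
  : set (tup R (m + n)) :=
  [set z | exists x y, [/\ z = cat_t x y, X x & Y y]].

Definition graph_on {R : Type} {m n : nat} (X : set (tup R m)) (f : tup R m -> tup R n)
  : set (tup R (m + n)) :=
  [set z | exists2 x, X x & z = cat_t x (f x)].

Definition perm_set {R : Type} {n : nat} (s : {perm 'I_n}) (X : set (tup R n)) : set (tup R n) :=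
  [set x | X (fun i => x (s i))].

Definition diag2 {R : Type} : set (tup R 2) :=
  [set x | x (@Ordinal 2 0 isT) = x (@Ordinal 2 1 isT)].

(** A "structure" on R, given (van den Dries style) by its 0-definable sets
    Def n ⊆ P(R^n). *)
Definition is_structure {R : Type} (Def : forall n, set (set (tup R n))) : Prop :=
  [/\ (forall n, Def n setT),
      (forall n X, Def n X -> Def n (~` X)),
      (forall n X Y, Def n X -> Def n Y -> Def n (X `|` Y)) /\
      (forall m n X Y, Def m X -> Def n Y -> Def (m + n) (setXt X Y)),
      (forall n (s : {perm 'I_n}) X, Def n X -> Def n (perm_set s X)) &
      Def 2 diag2 /\
      (forall n k Z, Def (n + k) Z -> Def n [set x | exists y : tup R k, Z (cat_t x y)])].

Definition Adef {R : Type} (Def : forall n, set (set (tup R n))) (A : set R) {n : nat}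
  (X : set (tup R n)) : Prop :=
  exists k (a : tup R k), (forall i, A (a i)) /\
    exists2 Z, Def (n + k) Z & X = [set x | Z (cat_t x a)].

Definition definable {R : Type} (Def : forall n, set (set (tup R n))) {n : nat}
  (X : set (tup R n)) : Prop := Adef Def setT X.

Definition acl {R : Type} (Def : forall n, set (set (tup R n))) (A : set R) : set R :=
  [set b | exists X : set (tup R 1), [/\ Adef Def A X, finite_set X & X (fun _ => b)]].

Definition dimt_le {R : Type} (Def : forall n, set (set (tup R n))) {n : nat}
  (a : tup R n) (A : set R) (k : nat) : Prop :=
  exists I : seq 'I_n, (size I <= k)%N /\
    forall i, acl Def (A `|` [set b | exists2 j, j \in I & b = a j]) (a i).

Definition dimt_pred {R : Type} (Def : forall n, set (set (tup R n))) {n : nat}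
  (a : tup R n) (A : set R) : pred nat :=
  fun k => `[< dimt_le Def a A k >] || (k == n).

Lemma dimt_pred_ex {R : Type} (Def : forall n, set (set (tup R n))) {n : nat}
  (a : tup R n) (A : set R) : exists k, dimt_pred Def a A k.
Proof. by exists n; rewrite /dimt_pred eqxx orbT. Qed.

Definition dimt {R : Type} (Def : forall n, set (set (tup R n))) {n : nat}
  (a : tup R n) (A : set R) : nat := ex_minn (dimt_pred_ex Def a A).

(** dim(X) = d  (X nonempty): the supremum of dim(a/A) over a in X and A over
    which X is defined (in an aleph_1-saturated geometric structure this is the
    usual max{dim(a/A) : a in X} for any small A defining X). *)
Definition hasdim {R : Type} (Def : forall n, set (set (tup R n))) {n : nat}
  (X : set (tup R n)) (d : nat) : Prop :=
  (exists A a, [/\ Adef Def A X, X a & dimt Def a A = d]) /\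
  (forall A a, Adef Def A X -> X a -> (dimt Def a A <= d)%N).

(** dim(X) < d (with dim(empty) = -oo) *)
Definition dim_lt {R : Type} (Def : forall n, set (set (tup R n))) {n : nat}
  (X : set (tup R n)) (d : nat) : Prop :=
  forall A a, Adef Def A X -> X a -> (dimt Def a A < d)%N.

Definition openn {R : topologicalType} {n : nat} (U : set (tup R n)) : Prop :=
  forall x, U x -> exists O : 'I_n -> set R,
    (forall i, open (O i) /\ O i (x i)) /\ (forall y, (forall i, O i (y i)) -> U y).

Definition clos {R : topologicalType} {n : nat} (X : set (tup R n)) : set (tup R n) :=
  [set a | forall U, openn U -> U a -> exists y, U y /\ X y].

Definition ropen {R : topologicalType} {n : nat} (X U : set (tup R n)) : Prop :=
  exists O, openn O /\ U = X `&` O.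

Definition contin_on {R : topologicalType} {m n : nat} (X : set (tup R m))
  (f : tup R m -> tup R n) : Prop :=
  forall x, X x -> forall O, openn O -> O (f x) ->
    exists W, [/\ openn W, W x & forall y, X y -> W y -> O (f y)].

Definition homeo {R : topologicalType} {m n : nat} (X : set (tup R m)) (Y : set (tup R n))
  (f : tup R m -> tup R n) : Prop :=
  (forall x, X x -> Y (f x)) /\
  exists g : tup R n -> tup R m,
    [/\ (forall y, Y y -> X (g y)), (forall x, X x -> g (f x) = x),
        (forall y, Y y -> f (g y) = y), contin_on X f & contin_on Y g].

Definition geometric {R : Type} (Def : forall n, set (set (tup R n))) : Prop :=
  (forall (A : set R) b c, acl Def (A `|` [set c]) b -> ~ acl Def A b ->
      acl Def (A `|` [set b]) c) /\
  (forall k (Z : set (tup R (1 + k))), Def (1 + k) Z -> exists N : nat,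
      forall b : tup R k, finite_set [set x : tup R 1 | Z (cat_t x b)] ->
        exists f : 'I_N -> tup R 1, [set x : tup R 1 | Z (cat_t x b)] `<=` range f).

Definition aleph1_saturated {R : Type} (Def : forall n, set (set (tup R n))) : Prop :=
  forall (A : set R) n (F : nat -> set (tup R n)), countable A ->
    (forall i, Adef Def A (F i)) ->
    (forall k, exists x, forall i, (i <= k)%N -> F i x) ->
    exists x, forall i, F i x.

Definition hausdorff_geometric {R : topologicalType}
  (Def : forall n, set (set (tup R n))) : Prop :=
  [/\ is_structure Def /\ hausdorff_space R,
      geometric Def /\ aleph1_saturated Def,
      (* (3) *)
      (forall n A (X : set (tup R n)) d a, Adef Def A X -> hasdim Def X d ->
          clos (clos X `\` X) a -> (dimt Def a A < d)%N),
      (* (4) *)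
      (forall n (A B : set R) (X : set (tup R n)) d a, countable A -> countable B ->
          A `<=` B -> Adef Def A X -> hasdim Def X d -> X a -> dimt Def a A = d ->
          forall U, openn U -> U a -> exists b, [/\ U b, X b & dimt Def b B = d]) &
      (forall m n A (X : set (tup R m)) (Y : set (tup R n)) Z d x y,
          Adef Def A X -> Adef Def A Y -> Adef Def A Z ->
          Z `<=` setXt X Y -> hasdim Def X d -> hasdim Def Y d -> hasdim Def Z d ->
          (forall x', finite_set [set y' | Z (cat_t x' y')]) ->
          (forall y', finite_set [set x' | Z (cat_t x' y')]) ->
          Z (cat_t x y) -> dimt Def (cat_t x y) A = d ->
          exists U V (f : tup R m -> tup R n),
            [/\ ropen X U /\ U x, ropen Y V /\ V y, homeo U V f &
                Z `&` setXt U V = graph_on U f])].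

Definition t_minimal {R : topologicalType} (Def : forall n, set (set (tup R n))) : Prop :=
  [/\ hausdorff_geometric Def,
      (exists k (B : set (tup R (1 + k))), Def (1 + k) B /\
         (forall b : tup R k, open [set r : R | B (cat_t (fun _ => r) b)]) /\
         (forall (U : set R) r, open U -> U r -> exists b : tup R k,
             B (cat_t (fun _ => r) b) /\ [set r' : R | B (cat_t (fun _ => r') b)] `<=` U)) &
      (forall r : R, ~ open [set r])].

Definition lore {R : topologicalType} (Def : forall n, set (set (tup R n)))
  (S : forall n, set (set (tup R n))) : Prop :=
  [/\ (forall n X, S n X -> definable Def X),
      [/\ S 1 setT, S 2 diag2,
          (forall m n X Y, S m X -> S n Y -> S (m + n) (setXt X Y)),
          (forall n X Y, S n X -> S n Y -> S n (X `&` Y)) &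
          (forall n (s : {perm 'I_n}) X, S n X -> S n (perm_set s X))],
      (forall m n (X : set (tup R m)) (Y : set (tup R n)) f,
          homeo X Y f -> S m X -> S (m + n) (graph_on X f) -> S n Y),
      (forall n X U, S n X -> definable Def U -> ropen X U -> S n U) /\
      (forall n X, definable Def X ->
          (forall x, X x -> exists U, [/\ ropen X U, U x & S n U]) -> S n X) &
      (* (iv) *)
      (forall n A (X : set (tup R n)), Adef Def A X -> X !=set0 ->
          exists X', [/\ Adef Def A X', S n X', ropen X X' &
                       forall d, hasdim Def X d -> dim_lt Def (X `\` X') d])].

Definition loric_map {R : topologicalType} (S : forall n, set (set (tup R n)))
  {m n : nat} (X : set (tup R m)) (f : tup R m -> tup R n) : Prop :=
  contin_on X f /\ S (m + n) (graph_on X f).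

Definition loric_homeo {R : topologicalType} (S : forall n, set (set (tup R n)))
  {m n : nat} (X : set (tup R m)) (Y : set (tup R n)) (f : tup R m -> tup R n) : Prop :=
  loric_map S X f /\ homeo X Y f.

Definition lorically_homeomorphic {R : topologicalType} (S : forall n, set (set (tup R n)))
  {m n : nat} (X : set (tup R m)) (Y : set (tup R n)) : Prop :=
  exists f, loric_homeo S X Y f.

Definition lman_pt {R : topologicalType} (Def : forall n, set (set (tup R n)))
  (S : forall n, set (set (tup R n))) {k : nat} (X : set (tup R k)) (n : nat)
  (x : tup R k) : Prop :=
  exists (U : set (tup R k)) (W : set (tup R n)),
    [/\ definable Def U, ropen X U, U x, openn W & lorically_homeomorphic S U W].

Definition loric_manifold {R : topologicalType} (Def : forall n, set (set (tup R n)))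
  (S : forall n, set (set (tup R n))) (n : nat) {k : nat} (Y : set (tup R k)) : Prop :=
  [/\ definable Def Y, hasdim Def Y n & forall y, Y y -> lman_pt Def S Y n y].

(* Main.v *)
Require Import Defs.
From HB Require Import structures.
From mathcomp Require Import all_boot fingroup perm.
From mathcomp Require Import boolp classical_sets cardinality topology.
Local Open Scope classical_set_scope.
Unset Implicit Arguments.
Unset Strict Implicit.
Unset Printing Implicit Defensive.

Section Tup.
Context {T : Type}.

Definition lft {m n} (z : 'I_(m+n) -> T) : 'I_m -> T := fun i => z (lshift n i).
Definition rgt {m n} (z : 'I_(m+n) -> T) : 'I_n -> T := fun j => z (rshift m j).

Arguments lft : simpl never.
Arguments graph_on : simpl never.
Arguments setXt : simpl never.
Arguments rgt : simpl never.

Lemma split_l {m n} (i : 'I_m) : split (lshift n i) = inl i.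
Proof. exact: (@unsplitK m n (inl i)). Qed.
Lemma split_r {m n} (i : 'I_n) : split (rshift m i) = inr i.
Proof. exact: (@unsplitK m n (inr i)). Qed.

Lemma cat_tl {m n} (x : 'I_m -> T) (y : 'I_n -> T) i : cat_t x y (lshift n i) = x i.
Proof. by rewrite /cat_t split_l. Qed.
Lemma cat_tr {m n} (x : 'I_m -> T) (y : 'I_n -> T) i : cat_t x y (rshift m i) = y i.
Proof. by rewrite /cat_t split_r. Qed.

Lemma lft_cat {m n} (x : 'I_m -> T) (y : 'I_n -> T) : lft (cat_t x y) = x.
Proof. by apply: funext => i; rewrite /lft cat_tl. Qed.
Lemma rgt_cat {m n} (x : 'I_m -> T) (y : 'I_n -> T) : rgt (cat_t x y) = y.
Proof. by apply: funext => i; rewrite /rgt cat_tr. Qed.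

Lemma cat_eta {m n} (z : 'I_(m+n) -> T) : z = cat_t (lft z) (rgt z).
Proof.
apply: funext => i; rewrite /cat_t /lft /rgt.
by case: split_ordP => j ->; rewrite ?split_l ?split_r.
Qed.

Lemma cat_inj {m n} (x x' : 'I_m -> T) (y y' : 'I_n -> T) :
  cat_t x y = cat_t x' y' -> x = x' /\ y = y'.
Proof.
move=> e; split; first by rewrite -(lft_cat x y) e lft_cat.
by rewrite -(rgt_cat x y) e rgt_cat.
Qed.

Lemma comp_cat {U m n p} (f : 'I_m -> 'I_p) (g : 'I_n -> 'I_p) (z : 'I_p -> U) :
  (fun i => z (cat_t f g i)) = cat_t (fun i => z (f i)) (fun i => z (g i)).
Proof. by apply: funext => i; rewrite /cat_t; case: split. Qed.

Lemma comp_catE {U m n p} (f : 'I_m -> 'I_p) (g : 'I_n -> 'I_p) (z : 'I_p -> U) x y :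
  (forall i, z (f i) = x i) -> (forall j, z (g j) = y j) ->
  (fun i => z (cat_t f g i)) = cat_t x y.
Proof. by move=> hf hg; rewrite comp_cat; congr cat_t; apply: funext. Qed.

Lemma tup1_eta (x : 'I_1 -> T) : x = (fun _ => x ord0).
Proof. by apply: funext => i; rewrite ord1. Qed.

Lemma setXtE {m n} (X : set ('I_m -> T)) (Y : set ('I_n -> T)) z :
  setXt X Y z <-> X (lft z) /\ Y (rgt z).
Proof.
split.
  by case=> x [y [-> Xx Yy]]; rewrite lft_cat rgt_cat.
by case=> Xx Yy; exists (lft z), (rgt z); split => //; apply: cat_eta.
Qed.

Lemma setXt_cat {m n} (X : set ('I_m -> T)) (Y : set ('I_n -> T)) x y :
  setXt X Y (cat_t x y) <-> X x /\ Y y.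
Proof. by rewrite setXtE lft_cat rgt_cat. Qed.

Lemma graph_cat {m n} (X : set ('I_m -> T)) (f : ('I_m -> T) -> ('I_n -> T)) x y :
  graph_on X f (cat_t x y) <-> X x /\ y = f x.
Proof.
split.
  by case=> x' Xx' /cat_inj [-> ->].
by case=> Xx ->; exists x.
Qed.

Lemma graphE {m n} (X : set ('I_m -> T)) (f : ('I_m -> T) -> ('I_n -> T)) z :
  graph_on X f z <-> X (lft z) /\ rgt z = f (lft z).
Proof. by rewrite {1}(cat_eta z) graph_cat. Qed.

End Tup.

Lemma set_ext T (X Y : set T) : (forall x, X x <-> Y x) -> X = Y.
Proof. by move=> h; apply: funext => x; apply: propext. Qed.

Section DefClos.
Variable R : Type.

Definition t0 : 'I_0 -> R := fun i => False_rect R (notF (ltn_ord i)).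

Variable P : forall n, set (set ('I_n -> R)).
Hypothesis PT : forall n, P n setT.
Hypothesis PI : forall n X Y, P n X -> P n Y -> P n (X `&` Y).
Hypothesis PX : forall m n X Y, P m X -> P n Y -> P (m + n) (setXt X Y).
Hypothesis Pperm : forall n (s : {perm 'I_n}) X, P n X -> P n (perm_set s X).
Hypothesis Pdiag : P 2 diag2.

Lemma P_ext {n} (X Y : set ('I_n -> R)) : (forall x, X x <-> Y x) -> P n X -> P n Y.
Proof. by move=> /set_ext ->. Qed.

Lemma P_cast {n n'} (e : n = n') {X} : P n X -> P n' [set y | X (fun i => y (cast_ord e i))].
Proof.
case: n' / e; apply: P_ext => x /=.
by have -> : (fun i => x (cast_ord (erefl n) i)) = x by apply: funext => i; rewrite cast_ord_id.
Qed.

Lemma P_eq N (p q : 'I_N) : P N [set z | z p = z q].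
Proof.
have [->|npq] := eqVneq p q.
  by apply: P_ext (PT N) => z; split.
have N2 : 2 <= N.
  case: N p q npq => [[]//|[|N]] p q; last by [].
  by rewrite (ord1 p) (ord1 q) eqxx.
have e : 2 + (N - 2) = N by rewrite subnKC.
have := P_cast e (PX _ _ _ _ Pdiag (PT (N - 2))).
set c0 := cast_ord e (lshift (N - 2) (@Ordinal 2 0 isT)).
set c1 := cast_ord e (lshift (N - 2) (@Ordinal 2 1 isT)).
have c01 : c0 != c1 by rewrite /c0 /c1 (inj_eq (@cast_ord_inj _ _ _)) eq_lshift.
set s1 := tperm c0 p.
set c1' := s1 c1.
set s := (s1 * tperm c1' q)%g.
move=> /(Pperm _ s); apply: P_ext => z /=.
rewrite /perm_set /= setXtE /lft /diag2 /=.
have -> : s (cast_ord e (lshift (N - 2) (@Ordinal 2 0 isT))) = p.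
  rewrite permM -/c0 /s1 tpermL tpermD //.
    by rewrite /c1' /s1 -{2}(tpermL c0 p) (inj_eq perm_inj) eq_sym.
  by rewrite eq_sym.
have -> : s (cast_ord e (lshift (N - 2) (@Ordinal 2 1 isT))) = q.
  by rewrite permM -/c1 -/s1 -/c1' tpermL.
by split => [[]|].
Qed.

Lemma P_bigIs N (I : eqType) (s : seq I) (F : I -> set ('I_N -> R)) :
  (forall i, P N (F i)) -> P N [set z | forall i, i \in s -> F i z].
Proof.
move=> hF; elim: s => [|i s IH].
  by apply: P_ext (PT N) => z; split.
apply: P_ext (PI _ _ _ (hF i) IH) => z /=; split.
  by case=> h1 h2 j; rewrite inE => /orP[/eqP->|]//; apply: h2.
by move=> h; split => [|j hj]; apply: h; rewrite inE ?eqxx ?hj ?orbT.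
Qed.

Lemma P_bigI N (I : finType) (F : I -> set ('I_N -> R)) :
  (forall i, P N (F i)) -> P N [set z | forall i, F i z].
Proof.
move=> /(P_bigIs _ _ (enum I)); apply: P_ext => z /=; split => h i.
  by apply: h; rewrite mem_enum.
by move=> _; apply: h.
Qed.

End DefClos.

Section Def.
Context {R : Type}.
Context {Def : forall n, set (set ('I_n -> R))}.
Hypothesis hs : is_structure Def.

Lemma DT n : Def n setT. Proof. by case: hs. Qed.
Lemma DC n X : Def n X -> Def n (~` X). Proof. by case: hs => _ h _ _ _; apply: h. Qed.
Lemma DU n X Y : Def n X -> Def n Y -> Def n (X `|` Y). Proof. by case: hs => _ _ [h _] _ _; apply: h. Qed.
Lemma DX m n X Y : Def m X -> Def n Y -> Def (m + n) (setXt X Y). Proof. by case: hs => _ _ [_ h] _ _; apply: h. Qed.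
Lemma Dperm n (s : {perm 'I_n}) X : Def n X -> Def n (perm_set s X). Proof. by case: hs => _ _ _ h _; apply: h. Qed.
Lemma Ddiag : Def 2 diag2. Proof. by case: hs => _ _ _ _ []. Qed.
Lemma Dex n k Z : Def (n + k) Z -> Def n [set x | exists y : 'I_k -> R, Z (cat_t x y)].
Proof. by case: hs => _ _ _ _ [_ h]; apply: h. Qed.
Lemma DI n X Y : Def n X -> Def n Y -> Def n (X `&` Y).
Proof.
move=> hX hY; have := DC _ _ (DU _ _ _ (DC _ _ hX) (DC _ _ hY)).
by rewrite setCU !setCK.
Qed.
Lemma Dext n (X Y : set ('I_n -> R)) : (forall x, X x <-> Y x) -> Def n X -> Def n Y.
Proof. by move=> /set_ext ->. Qed.

Lemma Deq N (p q : 'I_N) : Def N [set z | z p = z q].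
Proof. exact: (P_eq _ Def DT DX Dperm Ddiag). Qed.
Lemma DbigI N (I : finType) (F : I -> set ('I_N -> R)) :
  (forall i, Def N (F i)) -> Def N [set z | forall i, F i z].
Proof. exact: (P_bigI _ Def DT DI). Qed.

Lemma Dpull m n (h : 'I_m -> 'I_n) X : Def m X -> Def n [set y | X (fun i => y (h i))].
Proof.
move=> hX.
have W := DX _ _ _ _ (DT n) hX.
have E := DbigI _ _ (fun j : 'I_m => [set z : 'I_(n + m) -> R | z (lshift m (h j)) = z (rshift n j)])
   (fun j => Deq _ _ _).
have := Dex _ _ _ (DI _ _ _ W E).
apply: Dext => y /=; split.
  case=> x [/setXt_cat [_ Xx] /= hj].
  have -> : (fun i => y (h i)) = x; last by [].
  by apply: funext => i; have := hj i; rewrite cat_tl cat_tr.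
move=> Xy; exists (fun i => y (h i)); split; first by apply/setXt_cat.
by move=> j /=; rewrite cat_tl cat_tr.
Qed.

Lemma Adef_ext A n (X Y : set ('I_n -> R)) : (forall x, X x <-> Y x) -> Adef Def A X -> Adef Def A Y.
Proof. by move=> /set_ext ->. Qed.

Lemma Adef_mono A B n (X : set ('I_n -> R)) : A `<=` B -> Adef Def A X -> Adef Def B X.
Proof. by move=> AB [k [a [ha hZ]]]; exists k, a; split => // i; apply: AB. Qed.

Lemma Adef_Def A n (X : set ('I_n -> R)) : Def n X -> Adef Def A X.
Proof.
move=> hX; exists 0, (t0 R); split; first by move=> i; case: (notF (ltn_ord i)).
exists [set w : 'I_(n + 0) -> R | X (fun i => w (lshift 0 i))]; first exact: Dpull.
apply: set_ext => x /=.
by have -> : (fun i => cat_t x (t0 R) (lshift 0 i)) = x by apply: funext => i; rewrite cat_tl.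
Qed.

Lemma Adef_pull A m n (h : 'I_m -> 'I_n) (X : set ('I_m -> R)) :
  Adef Def A X -> Adef Def A [set y | X (fun i => y (h i))].
Proof.
move=> [k [a [ha [Z hZ ->]]]]; exists k, a; split => //.
exists [set w : 'I_(n + k) -> R | Z (fun i => w (cat_t (fun j => lshift k (h j)) (fun j => rshift n j) i))].
  exact: Dpull.
apply: set_ext => y /=; rewrite comp_cat.
have -> : (fun j => cat_t y a (lshift k (h j))) = (fun j => y (h j)) by apply: funext => j; rewrite cat_tl.
have -> : (fun j => cat_t y a (rshift n j)) = a by apply: funext => j; rewrite cat_tr.
by [].
Qed.

Lemma Adef_two A n (X Y : set ('I_n -> R)) : Adef Def A X -> Adef Def A Y ->
  exists k (c : 'I_k -> R), (forall i, A (c i)) /\ exists Z1 Z2, [/\ Def (n + k) Z1, Def (n + k) Z2,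
    X = [set x | Z1 (cat_t x c)] & Y = [set x | Z2 (cat_t x c)]].
Proof.
move=> [k1 [a [ha [Z1 hZ1 ->]]]] [k2 [b [hb [Z2 hZ2 ->]]]].
exists (k1 + k2), (cat_t a b); split.
  by move=> i; rewrite /cat_t; case: split.
exists [set w : 'I_(n + (k1 + k2)) -> R | Z1 (fun i => w (cat_t (fun j => lshift (k1 + k2) j) (fun j => rshift n (lshift k2 j)) i))].
exists [set w : 'I_(n + (k1 + k2)) -> R | Z2 (fun i => w (cat_t (fun j => lshift (k1 + k2) j) (fun j => rshift n (rshift k1 j)) i))].
split; try exact: Dpull.
  apply: set_ext => y /=; rewrite comp_cat.
  have -> : (fun j => cat_t y (cat_t a b) (lshift (k1 + k2) j)) = y by apply: funext => j; rewrite cat_tl.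
  by have -> : (fun j => cat_t y (cat_t a b) (rshift n (lshift k2 j))) = a by apply: funext => j; rewrite cat_tr cat_tl.
apply: set_ext => y /=; rewrite comp_cat.
have -> : (fun j => cat_t y (cat_t a b) (lshift (k1 + k2) j)) = y by apply: funext => j; rewrite cat_tl.
by have -> : (fun j => cat_t y (cat_t a b) (rshift n (rshift k1 j))) = b by apply: funext => j; rewrite !cat_tr.
Qed.

Lemma Adef_I A n (X Y : set ('I_n -> R)) : Adef Def A X -> Adef Def A Y -> Adef Def A (X `&` Y).
Proof.
move=> hX hY; have [k [c [hc [Z1 [Z2 [h1 h2 -> ->]]]]]] := Adef_two _ _ _ _ hX hY.
by exists k, c; split => //; exists (Z1 `&` Z2); [exact: DI|].
Qed.

Lemma Adef_U A n (X Y : set ('I_n -> R)) : Adef Def A X -> Adef Def A Y -> Adef Def A (X `|` Y).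
Proof.
move=> hX hY; have [k [c [hc [Z1 [Z2 [h1 h2 -> ->]]]]]] := Adef_two _ _ _ _ hX hY.
by exists k, c; split => //; exists (Z1 `|` Z2); [exact: DU|].
Qed.

Lemma Adef_C A n (X : set ('I_n -> R)) : Adef Def A X -> Adef Def A (~` X).
Proof.
move=> [k [a [ha [Z hZ ->]]]]; exists k, a; split => //.
by exists (~` Z); [exact: DC|].
Qed.

Lemma Adef_D A n (X Y : set ('I_n -> R)) : Adef Def A X -> Adef Def A Y -> Adef Def A (X `\` Y).
Proof. by move=> hX hY; apply: Adef_I => //; apply: Adef_C. Qed.

Lemma Adef_T A n : Adef Def A (@setT ('I_n -> R)).
Proof. exact/Adef_Def/DT. Qed.

Lemma Adef_bigI A N (I : finType) (F : I -> set ('I_N -> R)) :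
  (forall i, Adef Def A (F i)) -> Adef Def A [set z | forall i, F i z].
Proof.
move=> hF.
suff: Adef Def A [set z | forall i, i \in enum I -> F i z].
  by apply: Adef_ext => z /=; split => h i; [apply: h; rewrite mem_enum | move=> _; apply: h].
elim: (enum I) => [|i s IH].
  by apply: Adef_ext (Adef_T A N) => z; split.
apply: Adef_ext (Adef_I _ _ _ _ (hF i) IH) => z /=; split.
  by case=> h1 h2 j; rewrite inE => /orP[/eqP->|]//; apply: h2.
by move=> h; split => [|j hj]; apply: h; rewrite inE ?eqxx ?hj ?orbT.
Qed.

Lemma Adef_ex A n k (Z : set ('I_(n + k) -> R)) :
  Adef Def A Z -> Adef Def A [set x | exists y : 'I_k -> R, Z (cat_t x y)].
Proof.
move=> [ka [a [ha [Z0 hZ0 ->]]]]; exists ka, a; split => //.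
pose h : 'I_((n + k) + ka) -> 'I_((n + ka) + k) :=
  cat_t (cat_t (fun i => lshift k (lshift ka i)) (fun j => rshift (n + ka) j)) (fun l => lshift k (rshift n l)).
exists [set u : 'I_(n + ka) -> R | exists y : 'I_k -> R, Z0 (fun i => cat_t u y (h i))].
  by apply: (Dex _ _ [set v | Z0 (fun i => v (h i))]); apply: Dpull.
apply: set_ext => x /=.
suff E : forall y, (fun i => cat_t (cat_t x a) y (h i)) = cat_t (cat_t x y) a by split; case=> y; rewrite ?E; exists y; rewrite ?E.
move=> y; rewrite /h !comp_cat.
congr cat_t; last by apply: funext => l; rewrite cat_tl cat_tr.
congr cat_t; apply: funext => i; by rewrite ?cat_tl ?cat_tr.
Qed.

Lemma Adef_swap A m n (Z : set ('I_(m + n) -> R)) :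
  Adef Def A Z -> Adef Def A [set w : 'I_(n + m) -> R | Z (cat_t (rgt w) (lft w))].
Proof.
move=> /(Adef_pull _ _ _ (cat_t (fun i => rshift n i) (fun j => lshift m j))).
by apply: Adef_ext => w /=; rewrite comp_cat.
Qed.

Lemma Adef_exl A m n (Z : set ('I_(m + n) -> R)) :
  Adef Def A Z -> Adef Def A [set y | exists x : 'I_m -> R, Z (cat_t x y)].
Proof.
move=> /Adef_swap /Adef_ex; apply: Adef_ext => y /=.
by split; case=> x hx; exists x; move: hx; rewrite lft_cat rgt_cat.
Qed.

Lemma Adef_fiber A m n (Z : set ('I_(m + n) -> R)) (y : 'I_n -> R) :
  Adef Def A Z -> (forall j, A (y j)) -> Adef Def A [set x | Z (cat_t x y)].
Proof.
move=> [k [c [hc [Z0 hZ0 ->]]]] hy.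
exists (n + k), (cat_t y c); split.
  by move=> i; rewrite /cat_t; case: split.
pose h : 'I_((m + n) + k) -> 'I_(m + (n + k)) :=
  cat_t (cat_t (fun i => lshift (n + k) i) (fun j => rshift m (lshift k j))) (fun l => rshift m (rshift n l)).
exists [set w | Z0 (fun i => w (h i))]; first exact: Dpull.
apply: set_ext => x /=; rewrite /h !comp_cat.
have -> : (fun i => cat_t x (cat_t y c) (lshift (n + k) i)) = x by apply: funext => i; rewrite cat_tl.
have -> : (fun i => cat_t x (cat_t y c) (rshift m (lshift k i))) = y by apply: funext => i; rewrite cat_tr cat_tl.
by have -> : (fun i => cat_t x (cat_t y c) (rshift m (rshift n i))) = c by apply: funext => i; rewrite !cat_tr.
Qed.

Lemma Adef_pt A (b : R) : A b -> Adef Def A [set (fun _ : 'I_1 => b)].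
Proof.
move=> Ab; exists 1, (fun _ => b); split => //.
exists [set w : 'I_(1 + 1) -> R | w (lshift 1 ord0) = w (rshift 1 ord0)]; first exact: Deq.
apply: set_ext => x /=; rewrite cat_tl cat_tr; split.
  by move=> h; rewrite (tup1_eta x) h.
by move=> h; rewrite (tup1_eta x) h.
Qed.

Lemma Adef_fin A n (X : set ('I_n -> R)) : Adef Def A X ->
  exists A0, [/\ finite_set A0, A0 `<=` A & Adef Def A0 X].
Proof.
move=> [k [a [ha hZ]]]; exists (range a); split.
- by apply: finite_image; apply: finite_finset.
- by move=> _ [i _ <-].
- by exists k, a; split => // i; exists i.
Qed.

Lemma Adef_XT A m n (X : set ('I_m -> R)) (Y : set ('I_n -> R)) :
  Adef Def A X -> Adef Def A Y -> Adef Def A (setXt X Y).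
Proof.
move=> hX hY.
have h1 := Adef_pull _ _ _ (fun i => lshift n i) _ hX.
have h2 := Adef_pull _ _ _ (fun i => rshift m i) _ hY.
by apply: Adef_ext (Adef_I _ _ _ _ h1 h2) => z; rewrite setXtE.
Qed.

End Def.

Section Acl.
Context {R : topologicalType}.
Context {Def : forall n, set (set ('I_n -> R))}.
Hypothesis hs : is_structure Def.
Hypothesis hg : geometric Def.

Lemma acl_mono (A B : set R) b : A `<=` B -> acl Def A b -> acl Def B b.
Proof. by move=> AB [X [hX fX Xb]]; exists X; split => //; apply: Adef_mono AB hX. Qed.

Lemma acl_base (A : set R) b : A b -> acl Def A b.
Proof. by move=> Ab; exists [set (fun _ => b)]; split; [apply: Adef_pt | apply: finite_set1 | ]. Qed.

Lemma acl_sub (A B : set R) b : (forall z, B z -> acl Def A z) -> acl Def B b -> acl Def A b.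
Proof.
move=> hBA [X [[k [p [hp [Z hZ EX]]]] fX Xb]].
have /choice [F hF] : forall i : 'I_k, exists F : set ('I_1 -> R),
    [/\ Adef Def A F, finite_set F & F (fun _ => p i)].
  by move=> i; apply: hBA.
pose Fp := [set q : 'I_k -> R | forall i, F i (fun _ => q i)].
have AFp : Adef Def A Fp.
  apply: Adef_bigI => // i.
  by case: (hF i) => hA _ _; have := Adef_pull hs A _ _ (fun _ : 'I_1 => i) _ hA.
have [N hN] := hg.2 k Z hZ.
pose Q := [set q : 'I_k -> R | exists y : 'I_N -> R,
  forall x : 'I_1 -> R, Z (cat_t x q) -> exists j, x = (fun _ => y j)].
pose h := cat_t (fun _ : 'I_1 => rshift (k + N) (@ord0 0)) (fun i : 'I_k => lshift 1 (lshift N i)).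
pose V1 := [set w : 'I_((k + N) + 1) -> R | Z (fun i => w (h i)) /\
   forall j : 'I_N, ~ (w (rshift (k + N) ord0) = w (lshift 1 (rshift k j)))].
have DV1 : Def _ V1.
  apply: (DI hs); first exact: (Dpull hs).
  by apply: (DbigI hs) => j; apply: (DC hs); apply: (Deq hs).
have DQ : Def k Q.
  have := Dex hs _ _ _ (DC hs _ _ (Dex hs _ _ _ DV1)).
  apply: Dext => // q /=; split; case=> y hy; exists y.
    move=> x Zx; apply: contrapT => nj; apply: hy; exists x; split.
      have -> : (fun i => cat_t (cat_t q y) x (h i)) = cat_t x q; last by [].
      by apply: comp_catE => i; rewrite ?cat_tr ?cat_tl ?(ord1 i).
    move=> j; rewrite cat_tr cat_tl cat_tr => e; apply: nj; exists j.
    by rewrite (tup1_eta x) e.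
  case=> x [Zx hj].
  have E : (fun i => cat_t (cat_t q y) x (h i)) = cat_t x q.
    by apply: comp_catE => i; rewrite ?cat_tr ?cat_tl ?(ord1 i).
  move: Zx; rewrite E => Zx.
  have [j ej] := hy _ Zx; apply: (hj j); rewrite cat_tr cat_tl cat_tr ej //.
pose W := [set x : 'I_1 -> R | exists q, Fp q /\ Q q /\ Z (cat_t x q)].
exists W; split.
- have AV : Adef Def A [set w : 'I_(1 + k) -> R | Fp (rgt w) /\ Q (rgt w) /\ Z w].
    apply: (Adef_I hs); first exact: (Adef_pull hs A _ _ (fun i => rshift 1 i) _ AFp).
    apply: (Adef_I hs); apply: (Adef_Def hs) => //.
    exact: (Dpull hs _ _ (fun i => rshift 1 i) _ DQ).
  have := Adef_ex hs _ _ _ _ AV.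
  by apply: Adef_ext => x; split => -[q hq]; exists q; move: hq => /=; rewrite rgt_cat.
- have fFp : finite_set Fp.
    pose G := \bigcup_(i in [set: 'I_k]) [set r | F i (fun _ => r)].
    have fG : finite_set G.
      apply: bigcup_finite; first exact: finite_finset.
      move=> i _; case: (hF i) => _ hfi _; apply: (sub_finite_set _ (finite_image (fun x : 'I_1 -> R => x ord0) hfi)).
      by move=> r Fr; exists (fun _ => r).
    have [s Es] := (finite_seqP G).1 fG.
    pose phi := fun f : {ffun 'I_k -> 'I_(size s).+1} => (fun i => nth b s (f i)).
    apply: (sub_finite_set _ (finite_image phi (@finite_finset _ setT))).
    move=> q Fq; exists [ffun i => inord (index (q i) s)] => //.
    apply: funext => i; rewrite /phi ffunE inordK ?ltnS ?index_size //.
    apply: nth_index; have : G (q i) by exists i.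
    by rewrite Es.
  apply: (sub_finite_set (B := \bigcup_(q in Fp) [set x | Q q /\ Z (cat_t x q)])).
    by move=> x [q [Fq [Qq Zx]]]; exists q.
  apply: bigcup_finite => // q _.
  have [Qq|nQ] := pselect (Q q); last first.
    by apply: (sub_finite_set _ (finite_set0 _)) => x [].
  case: Qq => y hy.
  apply: (sub_finite_set _ (finite_image (fun j : 'I_N => (fun _ : 'I_1 => y j)) (@finite_finset _ setT))).
  by move=> x [_ /hy [j ->]]; exists j.
- exists p; split; first by move=> i; case: (hF i).
  have Xp : Z (cat_t (fun _ => b) p) by move: Xb; rewrite EX.
  split => //.
  have fib : finite_set [set x : 'I_1 -> R | Z (cat_t x p)] by rewrite -EX.
  have [f hf] := hN p fib.
  exists (fun j => f j ord0) => x Zx.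
  by have [j _ ej] := hf x Zx; exists j; rewrite -ej -tup1_eta.
Qed.

Lemma acl_subset (A B : set R) : (forall z, B z -> acl Def A z) -> forall b, acl Def B b -> acl Def A b.
Proof. by move=> h b; apply: acl_sub. Qed.

Lemma exch (A : set R) b c : acl Def (A `|` [set c]) b -> ~ acl Def A b -> acl Def (A `|` [set b]) c.
Proof. exact: hg.1. Qed.

End Acl.

Section Matroid.
Context {R : topologicalType}.
Context {Def : forall n, set (set ('I_n -> R))}.
Hypothesis hs : is_structure Def.
Hypothesis hg : geometric Def.

Definition lset (L : seq R) : set R := [set y | y \in L].
Definition indep (A : set R) (L : seq R) :=
  uniq L /\ forall x, x \in L -> ~ acl Def (A `|` [set y | y \in L /\ y != x]) x.

Lemma indep_nil A : indep A [::].
Proof. by split. Qed.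

Lemma indep_perm A L L' : perm_eq L L' -> indep A L -> indep A L'.
Proof.
move=> pLL' [uL hL]; split; first by rewrite -(perm_uniq pLL').
move=> x; rewrite -(perm_mem pLL') => xL; apply: contra_not (hL x xL).
by apply: acl_mono => z [Az|[zL zx]]; [left|right; split => //; rewrite (perm_mem pLL')].
Qed.

Lemma indep_base A B L : A `<=` B -> indep B L -> indep A L.
Proof.
move=> AB [uL hL]; split => // x xL; apply: contra_not (hL x xL).
by apply: acl_mono => z [Az|h]; [left; apply: AB|right].
Qed.

Lemma indep_cons A L x : indep A L -> ~ acl Def (A `|` lset L) x -> indep A (x :: L).
Proof.
move=> [uL hL] nx.
have xL : x \notin L by apply/negP => xL; apply: nx; apply: (acl_base hs); right.
split; first by rewrite /= xL uL.
move=> y; rewrite inE; have [->|yx] := eqVneq y x => /= [_|yL].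
  apply: contra_not nx; apply: acl_mono => z [Az|[]]; [by left|].
  by rewrite inE => /orP[/eqP->|zL]; [rewrite eqxx|right].
move=> h; apply: (hL y yL); set A' := A `|` _.
have h2 : acl Def (A' `|` [set x]) y.
  apply: acl_mono h => z [Az|[]]; first by left; left.
  rewrite inE => /orP[/eqP->|zL zy]; first by right.
  by left; right.
apply: contrapT => ny; apply: nx.
apply: acl_mono (exch hg _ _ _ h2 ny) => z [[Az|[zL _]]|->]; [by left|by right|by right].
Qed.

Lemma indep_cat A L M : indep A L -> indep (A `|` lset L) M -> indep A (L ++ M).
Proof.
elim: M L => [|m M IH] L hL hM; first by rewrite cats0.
have [uM hMm] := hM.
have nm : ~ acl Def (A `|` lset L) m.
  apply: contra_not (hMm m (mem_head _ _)); apply: acl_mono => z hz; by left.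
have hL' : indep A (rcons L m).
  by apply: (indep_perm _ (m :: L)); [rewrite perm_sym perm_rcons | apply: indep_cons].
rewrite -cat_rcons; apply: IH => //.
move: uM => /= /andP[mM uM]; split => // y yM.
have ym : y != m by apply: contraNneq mM => <-.
apply: contra_not (hMm y _); last by rewrite inE yM orbT.
apply: acl_mono => z [[Az|]|[zM zy]].
- by left; left.
- rewrite /lset /= mem_rcons inE => /orP[/eqP->|zL]; last by left; right.
  by right; split; [rewrite mem_head|rewrite eq_sym].
- by right; split; [rewrite inE zM orbT|].
Qed.

Lemma steinitz K : forall A L, indep A L ->
  (forall x, x \in L -> acl Def (A `|` lset K) x) -> size L <= size K.
Proof.
elim: K => [|k K IH] A L [uL hL] hspan.
  case: L uL hL hspan => [//|x L] _ hL hspan.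
  exfalso; apply: (hL x (mem_head _ _)).
  by apply: acl_mono (hspan x (mem_head _ _)) => z [Az|//]; left.
have [all|nall] := pselect (forall x, x \in L -> acl Def (A `|` lset K) x).
  by apply: leq_trans (IH A L (conj uL hL) all) _.
have [x xL nx] : exists2 x, x \in L & ~ acl Def (A `|` lset K) x.
  apply: contrapT => nex; apply: nall => x xL; apply: contrapT => nx; apply: nex; by exists x.
have hL' : indep (A `|` [set x]) (rem x L).
  split; first exact: rem_uniq.
  move=> y; rewrite mem_rem_uniq // inE => /andP[yx yL].
  apply: contra_not (hL y yL); apply: acl_mono => z [[Az|->]|[]]; [by left|by right; split => //; rewrite eq_sym|].
  by rewrite mem_rem_uniq // inE => /andP[_ zL] zy; right.
have hsp : forall y, y \in rem x L -> acl Def ((A `|` [set x]) `|` lset K) y.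
  move=> y; rewrite mem_rem_uniq // inE => /andP[_ yL].
  apply: (acl_subset hs hg _ _ _ _ (hspan y yL)) => z [Az|].
    by apply: (acl_base hs); left; left.
  rewrite /lset /= inE => /orP[/eqP->|zK]; last by apply: (acl_base hs); right.
  have h1 : acl Def ((A `|` lset K) `|` [set k]) x.
    apply: acl_mono (hspan x xL) => w [Aw|]; first by left; left.
    rewrite /lset /= inE => /orP[/eqP->|wK]; [by right|by left; right].
  apply: acl_mono (exch hg _ _ _ h1 nx) => w [[Aw|wK]|->]; [by left; left|by right|by left; right].
have := IH _ _ hL' hsp.
have sL : 0 < size L by rewrite lt0n size_eq0; apply/eqP => L0; rewrite L0 in xL.
by rewrite size_rem //= => h; rewrite -(prednK sL) ltnS.
Qed.

Lemma dimt_min {n} (a : 'I_n -> R) A k : dimt_le Def a A k -> dimt Def a A <= k.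
Proof.
move=> h; rewrite /dimt; case: ex_minnP => m _ minm; apply: minm.
by apply/orP; left; apply/asboolP.
Qed.

Lemma dimt_wit {n} (a : 'I_n -> R) A : dimt_le Def a A (dimt Def a A).
Proof.
rewrite /dimt; case: ex_minnP => m /orP[/asboolP//|/eqP->] _.
exists (enum 'I_n); split; first by rewrite size_enum_ord.
by move=> i; apply: (acl_base hs); right; exists i; rewrite ?mem_enum.
Qed.

Lemma dimt_le_n {n} (a : 'I_n -> R) A : dimt Def a A <= n.
Proof. by rewrite /dimt; case: ex_minnP => m _ minm; apply: minm; rewrite /dimt_pred eqxx orbT. Qed.

Lemma dimt_anti {n} (a : 'I_n -> R) A B : A `<=` B -> dimt Def a B <= dimt Def a A.
Proof.
move=> AB; apply: dimt_min; have [I [sI hI]] := dimt_wit a A.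
exists I; split => // i; apply: acl_mono (hI i) => z [Az|h]; [by left; apply: AB|by right].
Qed.

Lemma lset_map {n} (a : 'I_n -> R) I : lset (map a I) = [set b | exists2 j, j \in I & b = a j].
Proof. by apply: set_ext => b; rewrite /lset /=; split => /mapP. Qed.

Lemma basis_ex {n} (a : 'I_n -> R) A : exists I : seq 'I_n,
  indep A (map a I) /\ forall i, acl Def (A `|` lset (map a I)) (a i).
Proof.
suff: forall G : seq 'I_n, exists I : seq 'I_n,
  indep A (map a I) /\ forall j, j \in G -> acl Def (A `|` lset (map a I)) (a j).
  by case/(_ (enum 'I_n)) => I [hI hsp]; exists I; split => // i; apply: hsp; rewrite mem_enum.
elim => [|j G [I [hI hsp]]]; first by exists [::]; split => //; apply: indep_nil.
have [aj|naj] := pselect (acl Def (A `|` lset (map a I)) (a j)).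
  by exists I; split => // j'; rewrite inE => /orP[/eqP->//|]; apply: hsp.
exists (j :: I); split; first exact: indep_cons.
move=> j'; rewrite inE => /orP[/eqP->|j'G].
  by apply: (acl_base hs); right; rewrite /lset /= mem_head.
apply: acl_mono (hsp j' j'G) => z [Az|zI]; [by left|right].
by rewrite /lset /= inE zI orbT.
Qed.

Lemma dim_basis {n} (a : 'I_n -> R) A I : indep A (map a I) ->
  (forall i, acl Def (A `|` lset (map a I)) (a i)) -> dimt Def a A = size I.
Proof.
move=> hI hsp; apply/eqP; rewrite eqn_leq; apply/andP; split.
  by apply: dimt_min; exists I; split => // i; rewrite -lset_map.
have [K [sK hK]] := dimt_wit a A.
rewrite -(size_map a I); apply: leq_trans (steinitz (map a K) _ _ hI _) _.
  by move=> x /mapP [i _ ->]; rewrite lset_map.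
by rewrite size_map.
Qed.

Lemma dim_span {n} (a : 'I_n -> R) A K : (forall i, acl Def (A `|` lset K) (a i)) -> dimt Def a A <= size K.
Proof.
move=> hK; have [I [hI hsp]] := basis_ex a A.
rewrite (dim_basis _ _ _ hI hsp) -(size_map a I).
by apply: (steinitz K _ _ hI) => x /mapP [i _ ->].
Qed.

Lemma dim_indep {n} (a : 'I_n -> R) A L : indep A L -> (forall x, x \in L -> exists i, x = a i) ->
  size L <= dimt Def a A.
Proof.
move=> hL hx; have [K [sK hK]] := dimt_wit a A.
apply: leq_trans (steinitz (map a K) _ _ hL _) _; last by rewrite size_map.
by move=> x /hx [i ->]; rewrite lset_map.
Qed.

Lemma dim1_acl (x : 'I_1 -> R) A : dimt Def x A = 0 <-> acl Def A (x ord0).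
Proof.
split => [h|h].
  have [I [sI hI]] := dimt_wit x A; move: sI; rewrite h leqn0 size_eq0 => /eqP I0.
  by apply: acl_mono (hI ord0) => z [//|]; rewrite I0 => -[].
apply/eqP; rewrite -leqn0; apply: dimt_min; exists [::]; split => // i.
by rewrite (ord1 i); apply: acl_mono h => z Az; left.
Qed.

Lemma dim_add {m n} (a : 'I_m -> R) (b : 'I_n -> R) A :
  dimt Def a A + dimt Def b (A `|` range a) <= dimt Def (cat_t a b) A.
Proof.
have [I [hI hspI]] := basis_ex a A.
have [J [hJ hspJ]] := basis_ex b (A `|` range a).
rewrite (dim_basis _ _ _ hI hspI) (dim_basis _ _ _ hJ hspJ) -(size_map a I) -(size_map b J) -size_cat.
apply: dim_indep.
  apply: indep_cat => //; apply: indep_base hJ => z [Az|/mapP [i _ ->]]; [by left|by right; exists i].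
move=> x; rewrite mem_cat => /orP[/mapP [i _ ->]|/mapP [j _ ->]].
  by exists (lshift n i); rewrite cat_tl.
by exists (rshift m j); rewrite cat_tr.
Qed.

Lemma dim_subadd {m n} (a : 'I_m -> R) (b : 'I_n -> R) A :
  dimt Def (cat_t a b) A <= dimt Def a A + dimt Def b A.
Proof.
have [I [sI hI]] := dimt_wit a A; have [J [sJ hJ]] := dimt_wit b A.
apply: dimt_min; exists (map (@lshift m n) I ++ map (@rshift m n) J); split.
  by rewrite size_cat !size_map; apply: leq_add.
move=> k; case: (split_ordP k) => i ->; rewrite ?cat_tl ?cat_tr.
  apply: acl_mono (hI i) => z [Az|[j jI ->]]; [by left|right].
  by exists (lshift n j); [rewrite mem_cat map_f | rewrite cat_tl].
apply: acl_mono (hJ i) => z [Az|[j jI ->]]; [by left|right].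
by exists (rshift m j); [rewrite mem_cat map_f ?orbT | rewrite cat_tr].
Qed.

End Matroid.

Section Dim.
Context {R : topologicalType}.
Context {Def : forall n, set (set ('I_n -> R))}.
Hypothesis hs : is_structure Def.
Hypothesis hg : geometric Def.
Hypothesis h4 : forall n (A B : set R) (X : set (tup R n)) d a, countable A -> countable B ->
          A `<=` B -> Adef Def A X -> hasdim Def X d -> X a -> dimt Def a A = d ->
          forall U, openn U -> U a -> exists b, [/\ U b, X b & dimt Def b B = d].

Lemma openn_T n : openn (@setT ('I_n -> R)).
Proof. by move=> x _; exists (fun _ => setT); split => // i; split => //; apply: openT. Qed.

Lemma hasdim_ex {n} {X : set ('I_n -> R)} : definable Def X -> X !=set0 -> exists d, hasdim Def X d.
Proof.
move=> dX [x0 Xx0].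
pose P := fun k => `[< exists A a, [/\ Adef Def A X, X a & dimt Def a A = k] >].
have exP : exists k, P k by exists (dimt Def x0 setT); apply/asboolP; exists setT, x0.
have ubP : forall k, P k -> k <= n by move=> k /asboolP [A [a [_ _ <-]]]; apply: dimt_le_n.
case: (ex_maxnP exP ubP) => d /asboolP hd maxd.
exists d; split => // A a hA Xa; apply: maxd; apply/asboolP; by exists A, a.
Qed.

Lemma hasdim_uniq n (X : set ('I_n -> R)) d e : hasdim Def X d -> hasdim Def X e -> d = e.
Proof.
move=> [[A [a [hA Xa <-]]] hd] [[B [b [hB Xb <-]]] he].
by apply/eqP; rewrite eqn_leq he ?hd.
Qed.

Lemma hasdim_fin {n} {X : set ('I_n -> R)} {d} : hasdim Def X d ->
  exists A0, [/\ finite_set A0, Adef Def A0 X & exists a, X a /\ dimt Def a A0 = d].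
Proof.
move=> [[A [a [hA Xa da]]] hd].
have [A0 [fA0 A0A hA0]] := Adef_fin A _ X hA.
exists A0; split => //; exists a; split => //.
apply/eqP; rewrite eqn_leq hd //= -da; exact: dimt_anti.
Qed.

Lemma gen {n} {X : set ('I_n -> R)} {d B} : hasdim Def X d -> finite_set B ->
  exists a, X a /\ d <= dimt Def a B.
Proof.
move=> hX fB; have [A0 [fA0 hA0 [a [Xa da]]]] := hasdim_fin hX.
have fAB : finite_set (A0 `|` B) by rewrite finite_setU.
have [b [_ Xb db]] := h4 n A0 (A0 `|` B) X d a (finite_set_countable fA0) (finite_set_countable fAB)
   (fun z h => or_introl h) hA0 hX Xa da setT (openn_T n) I.
exists b; split => //; rewrite -db; apply: (dimt_anti hs) => z Bz; by right.
Qed.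

Lemma hasdim_sub n (X Y : set ('I_n -> R)) d e : X `<=` Y -> hasdim Def X d -> hasdim Def Y e -> d <= e.
Proof.
move=> XY hX hY; have [B [fB hB _]] := hasdim_fin hY.
have [a [Xa da]] := gen hX fB.
by apply: leq_trans da _; apply: hY.2 => //; apply: XY.
Qed.

Lemma acl_fiber m n (B : set R) (Z : set ('I_(m + n) -> R)) (a : 'I_m -> R) (y : 'I_n -> R) :
  Adef Def B Z -> Z (cat_t a y) -> (forall x, Z (cat_t x y) -> x = a) ->
  forall i, acl Def (B `|` range y) (a i).
Proof.
move=> hZ Za uniq i.
have hFib : Adef Def (B `|` range y) [set x | Z (cat_t x y)].
  apply: (Adef_fiber hs) => [|j]; first by apply: Adef_mono hZ => z Bz; left.
  by right; exists j.
have hV : Adef Def (B `|` range y)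
    [set w : 'I_(1 + m) -> R | [set x | Z (cat_t x y)] (rgt w) /\ w (lshift m ord0) = w (rshift 1 i)].
  apply: (Adef_I hs); first exact: (Adef_pull hs _ _ _ (fun j => rshift 1 j) _ hFib).
  by apply: (Adef_Def hs); apply: (Deq hs).
exists [set t : 'I_1 -> R | exists x, Z (cat_t x y) /\ t ord0 = x i]; split.
- have := Adef_ex hs _ _ _ _ hV.
  apply: Adef_ext => t; split => -[x hx]; exists x; move: hx => /=;
    by rewrite rgt_cat cat_tl cat_tr.
- apply: (sub_finite_set _ (finite_set1 (fun _ : 'I_1 => a i))) => t [x [Zx e]].
  by rewrite (tup1_eta t) e (uniq _ Zx).
- by exists a.
Qed.

Lemma InvLe p q (X : set ('I_p -> R)) (Y : set ('I_q -> R)) f d e :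
  (forall x, X x -> Y (f x)) -> (forall x x', X x -> X x' -> f x = f x' -> x = x') ->
  definable Def (graph_on X f) -> hasdim Def X d -> hasdim Def Y e -> d <= e.
Proof.
move=> XY inj dG hX hY.
have [C [fC _ hC]] := Adef_fin _ _ _ dG.
have [D [fD hD _]] := hasdim_fin hY.
have fB : finite_set (C `|` D) by rewrite finite_setU.
have [a [Xa da]] := gen hX fB.
apply: leq_trans da _.
have ye : dimt Def (f a) (C `|` D) <= e.
  by apply: hY.2; [apply: Adef_mono hD => z Dz; right | apply: XY].
apply: leq_trans ye.
have [J [hJ hspJ]] := basis_ex hs hg (f a) (C `|` D).
rewrite (dim_basis hs hg _ _ _ hJ hspJ) -(size_map (f a) J).
apply: (dim_span hs hg) => i.
have hf := acl_fiber p q (C `|` D) (graph_on X f) a (f a)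
  (Adef_mono _ _ _ _ (fun z h => or_introl h) hC) (proj2 (graph_cat _ _ _ _) (conj Xa erefl)) _ i.
apply: (acl_subset hs hg _ _ _ _ (hf _)).
  by move=> z [Bz|[j _ <-]]; [apply: (acl_base hs); left|apply: hspJ].
move=> x /graph_cat [Xx ex]; exact: inj.
Qed.

Lemma hasdim_X m n (X : set ('I_m -> R)) (Y : set ('I_n -> R)) dm dn :
  hasdim Def X dm -> hasdim Def Y dn -> hasdim Def (setXt X Y) (dm + dn).
Proof.
move=> hX hY.
have [AX [fAX hAX [x0 [Xx0 _]]]] := hasdim_fin hX.
have [AY [fAY hAY [y0 [Yy0 _]]]] := hasdim_fin hY.
have dXY : definable Def (setXt X Y).
  by apply: (Adef_XT hs); [apply: (Adef_mono _ _ _ _ (fun z _ => I) hAX) | apply: (Adef_mono _ _ _ _ (fun z _ => I) hAY)].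
have [e he] := hasdim_ex dXY (ex_intro _ (cat_t x0 y0) (proj2 (setXt_cat _ _ _ _) (conj Xx0 Yy0))).
suff -> : dm + dn = e by [].
have [A0 [fA0 hA0 [z [XYz dz]]]] := hasdim_fin he.
apply/eqP; rewrite eqn_leq; apply/andP; split; last first.
  rewrite -dz (cat_eta z); apply: leq_trans (dim_subadd hs _ _ _) _.
  move: XYz; rewrite setXtE => -[Xz Yz].
  apply: leq_add.
    apply: hX.2 => //; apply: Adef_ext (Adef_ex hs _ _ _ _ hA0) => x.
    by split; [case=> y /setXt_cat [] //| move=> Xx; exists y0; apply/setXt_cat].
  apply: hY.2 => //; apply: Adef_ext (Adef_exl hs _ _ _ _ hA0) => y.
  by split; [case=> x /setXt_cat [] //| move=> Yy; exists x0; apply/setXt_cat].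
pose B := AX `|` AY.
have fB : finite_set B by rewrite finite_setU.
have [a [Xa da]] := gen hX fB.
have fBa : finite_set (B `|` range a).
  by rewrite finite_setU; split => //; apply: finite_image; apply: finite_finset.
have [b [Yb db]] := gen hY fBa.
apply: leq_trans (leq_add da db) _.
apply: leq_trans (dim_add hs hg a b B) _.
apply: he.2; last by apply/setXt_cat.
apply: (Adef_XT hs); [apply: Adef_mono hAX => w h; by left | apply: Adef_mono hAY => w h; by right].
Qed.

End Dim.

Section Topo.
Context {R : topologicalType}.

Lemma open_finI (I : finType) (P : I -> Prop) (F : I -> set R) :
  (forall i, open (F i)) -> open [set r | forall i, P i -> F i r].
Proof.
move=> hF.
have -> : [set r | forall i, P i -> F i r] = [set r | forall i, i \in enum I -> P i -> F i r].
  by apply: set_ext => r; split => H i; [move=> _; apply: H | apply: H; rewrite mem_enum].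
elim: (enum I) => [|i s IH].
  have -> : [set r : R | forall i, i \in [::] -> P i -> F i r] = setT
     by apply: set_ext => r; split.
  exact: openT.
have -> : [set r : R | forall j, j \in i :: s -> P j -> F j r] =
  [set r | P i -> F i r] `&` [set r | forall j, j \in s -> P j -> F j r].
  apply: set_ext => r; split.
    by move=> h; split => [|j js]; apply: h; rewrite inE ?eqxx ?js ?orbT.
  by case=> h1 h2 j; rewrite inE => /orP[/eqP->//|]; apply: h2.
apply: openI => //.
have [Pi|nPi] := pselect (P i).
  have -> : [set r | P i -> F i r] = F i by apply: set_ext => r; split => [h|h _]; [exact: h|exact: h].
  exact: hF.
have -> : [set r | P i -> F i r] = setT by apply: set_ext => r; split => // _ Pi; case: nPi.
exact: openT.
Qed.

Lemma openn_I n (U V : set ('I_n -> R)) : openn U -> openn V -> openn (U `&` V).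
Proof.
move=> hU hV x [Ux Vx].
have [O1 [h1 s1]] := hU x Ux; have [O2 [h2 s2]] := hV x Vx.
exists (fun i => O1 i `&` O2 i); split.
  by move=> i; case: (h1 i) => o1 x1; case: (h2 i) => o2 x2; split; [apply: openI|].
by move=> y hy; split; [apply: s1 => i; case: (hy i)|apply: s2 => i; case: (hy i)].
Qed.

Lemma openn_pull m n (h : 'I_m -> 'I_n) (O : set ('I_m -> R)) :
  openn O -> openn [set z : 'I_n -> R | O (fun i => z (h i))].
Proof.
move=> hO z Oz; have [Ob [hb sb]] := hO _ Oz.
exists (fun j => [set r | forall i, h i = j -> Ob i r]); split.
  move=> j; split; first by apply: open_finI => i; case: (hb i).
  by move=> i <-; case: (hb i).
by move=> y hy; apply: sb => i; apply: (hy (h i)).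
Qed.

Lemma openn1 (U : set R) : open U -> openn [set x : 'I_1 -> R | U (x ord0)].
Proof.
move=> oU x Ux; exists (fun _ => U); split => [i|y hy]; [by rewrite (ord1 i)|exact: hy].
Qed.

Lemma contin_coord m n (X : set ('I_n -> R)) (h : 'I_m -> 'I_n) :
  contin_on X (fun z => fun i => z (h i)).
Proof.
move=> x Xx O oO Ox; exists [set z | O (fun i => z (h i))]; split => //.
exact: openn_pull.
Qed.

Lemma contin_id n (X : set ('I_n -> R)) : contin_on X id.
Proof. by move=> x Xx O oO Ox; exists O; split. Qed.

Lemma contin_sub m n (X Y : set ('I_m -> R)) (f : ('I_m -> R) -> ('I_n -> R)) :
  X `<=` Y -> contin_on Y f -> contin_on X f.
Proof.
move=> XY cf x Xx O oO Ox; have [W [oW Wx hW]] := cf x (XY _ Xx) O oO Ox.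
by exists W; split => // y Xy Wy; apply: hW => //; apply: XY.
Qed.

Lemma contin_ext m n (X : set ('I_m -> R)) (f g : ('I_m -> R) -> ('I_n -> R)) :
  (forall x, X x -> f x = g x) -> contin_on X f -> contin_on X g.
Proof.
move=> fg cf x Xx O oO Ox; have [W [oW Wx hW]] := cf x Xx O oO (eq_ind_r O Ox (fg x Xx)).
by exists W; split => // y Xy Wy; rewrite -fg //; apply: hW.
Qed.

Lemma contin_comp m n p (X : set ('I_m -> R)) (Y : set ('I_n -> R))
  (f : ('I_m -> R) -> ('I_n -> R)) (g : ('I_n -> R) -> ('I_p -> R)) :
  (forall x, X x -> Y (f x)) -> contin_on X f -> contin_on Y g -> contin_on X (fun x => g (f x)).
Proof.
move=> XY cf cg x Xx O oO Ox.
have [W [oW Wx hW]] := cg (f x) (XY _ Xx) O oO Ox.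
have [V [oV Vx hV]] := cf x Xx W oW Wx.
by exists V; split => // y Xy Vy; apply: hW; [apply: XY|apply: hV].
Qed.

Lemma contin_cat m n p (X : set ('I_m -> R)) (f : ('I_m -> R) -> ('I_n -> R))
  (g : ('I_m -> R) -> ('I_p -> R)) :
  contin_on X f -> contin_on X g -> contin_on X (fun x => cat_t (f x) (g x)).
Proof.
move=> cf cg x Xx O oO Ox.
have [Ob [hb sb]] := oO _ Ox.
have o1 : openn [set y : 'I_n -> R | forall i, Ob (lshift p i) (y i)].
  move=> y hy; exists (fun i => Ob (lshift p i)); split => // i.
  by split => //; case: (hb (lshift p i)).
have o2 : openn [set y : 'I_p -> R | forall i, Ob (rshift n i) (y i)].
  move=> y hy; exists (fun i => Ob (rshift n i)); split => // i.
  by split => //; case: (hb (rshift n i)).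
have [W1 [oW1 W1x h1]] := cf x Xx _ o1 (fun i => eq_ind _ (Ob _) (proj2 (hb (lshift p i))) _ (cat_tl _ _ _)).
have [W2 [oW2 W2x h2]] := cg x Xx _ o2 (fun i => eq_ind _ (Ob _) (proj2 (hb (rshift n i))) _ (cat_tr _ _ _)).
exists (W1 `&` W2); split; [exact: openn_I|by []|].
move=> y Xy [W1y W2y]; apply: sb => k.
case: (split_ordP k) => i ->; rewrite ?cat_tl ?cat_tr.
  by apply: (h1 y Xy W1y).
by apply: (h2 y Xy W2y).
Qed.

Lemma contin_preim n p (Y : set ('I_n -> R)) (g : ('I_n -> R) -> ('I_p -> R)) (O : set ('I_p -> R)) :
  contin_on Y g -> openn O -> exists O', openn O' /\ forall y, Y y -> (O' y <-> O (g y)).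
Proof.
move=> cg oO.
exists [set z | exists W, [/\ openn W, W z & forall y, Y y -> W y -> O (g y)]]; split.
  move=> z [W [oW Wz hW]]; have [Ob [hb sb]] := oW z Wz.
  exists Ob; split => // y hy; exists W; split => //; exact: sb.
move=> y Yy; split; first by case=> W [_ Wy hW]; apply: hW.
by move=> Ogy; have [W [oW Wy hW]] := cg y Yy O oO Ogy; exists W; split.
Qed.

Lemma homeo_sub m n (X X' : set ('I_m -> R)) (Y Y' : set ('I_n -> R)) f g :
  (forall x, X x -> Y (f x)) ->
  [/\ (forall y, Y y -> X (g y)), (forall x, X x -> g (f x) = x),
        (forall y, Y y -> f (g y) = y), contin_on X f & contin_on Y g] ->
  X' `<=` X -> Y' `<=` Y -> (forall x, X' x -> Y' (f x)) -> (forall y, Y' y -> X' (g y)) ->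
  homeo X' Y' f.
Proof.
move=> XY [YX gf fg cf cg] XX' YY' h1 h2; split => //; exists g; split => //.
- by move=> x /XX'; apply: gf.
- by move=> y /YY'; apply: fg.
- exact: contin_sub cf.
- exact: contin_sub cg.
Qed.

End Topo.

Section OpenDim.
Context {R : topologicalType}.
Context {Def : forall n, set (set ('I_n -> R))}.
Hypothesis hs : is_structure Def.
Hypothesis hg : geometric Def.
Hypothesis h3 : forall n A (X : set (tup R n)) d a, Adef Def A X -> hasdim Def X d ->
          clos (clos X `\` X) a -> (dimt Def a A < d)%N.
Hypothesis h4 : forall n (A B : set R) (X : set (tup R n)) d a, countable A -> countable B ->
          A `<=` B -> Adef Def A X -> hasdim Def X d -> X a -> dimt Def a A = d ->
          forall U, openn U -> U a -> exists b, [/\ U b, X b & dimt Def b B = d].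
Hypothesis hH : hausdorff_space R.
Hypothesis hni : forall r : R, ~ open [set r].
Hypothesis hb : exists k (B : set (tup R (1 + k))), Def (1 + k) B /\
         (forall b : tup R k, open [set r : R | B (cat_t (fun _ => r) b)]) /\
         (forall (U : set R) r, open U -> U r -> exists b : tup R k,
             B (cat_t (fun _ => r) b) /\ [set r' : R | B (cat_t (fun _ => r') b)] `<=` U).

Lemma open_infinite (U F : set R) r : open U -> U r -> finite_set F -> exists s, U s /\ ~ F s.
Proof.
move=> oU Ur fF; apply: contrapT => nex.
have UF : U `<=` F by move=> s Us; apply: contrapT => nFs; apply: nex; exists s.
have cl : closed (U `\` [set r]).
  apply: ((@accessible_finite_set_closed R).1 (hausdorff_accessible hH)).
  by apply: finite_setD; apply: sub_finite_set UF fF.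
apply: (hni r).
have -> : [set r] = U `&` ~` (U `\` [set r]).
  apply: set_ext => s; split => [->|[Us h]]; first by split => // -[_]; apply.
  by apply: contrapT => sr; apply: h.
by apply: openI => //; rewrite openC.
Qed.

Lemma openn_infinite (V F : set ('I_1 -> R)) o : openn V -> V o -> finite_set F ->
  exists y, V y /\ ~ F y.
Proof.
move=> oV Vo fF; have [Ob [hb' sb]] := oV o Vo.
have [o1 x1] := hb' ord0.
have [s [Os nFs]] := open_infinite (Ob ord0) ((fun x : 'I_1 -> R => x ord0) @` F) (o ord0) o1 x1 (finite_image _ fF).
exists (fun _ => s); split.
  by apply: sb => i; rewrite (ord1 i).
by move=> Fs; apply: nFs; exists (fun _ => s).
Qed.

Lemma G1 (O : set ('I_1 -> R)) (B : set R) : openn O -> definable Def O -> O !=set0 -> finite_set B ->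
  exists x, O x /\ ~ acl Def B (x ord0).
Proof.
move=> oO dO nO fB.
have [e he] := hasdim_ex dO nO.
have e1 : e <= 1.
  by case: he => -[A [a [_ _ <-]]] _; apply: dimt_le_n.
move: e1; rewrite leq_eqVlt ltnS leqn0 => /orP[/eqP e1|/eqP e0]; subst e.
  have [x [Ox dx]] := gen hs h4 he fB.
  exists x; split => // ax.
  by move: dx; rewrite (proj2 (dim1_acl hs x B) ax).
exfalso.
have [A0 [fA0 hA0 [o [Oo dob]]]] := hasdim_fin hs he.
have [F [hF fF Fo]] := (dim1_acl hs o A0).1 dob.
pose X := O `\` F.
have hX : Adef Def A0 X by apply: (Adef_D hs).
have nX : X !=set0 by have [y [Oy nFy]] := openn_infinite O F o oO Oo fF; exists y.
have [e' he'] := hasdim_ex (Adef_mono _ _ _ _ (fun z _ => I) hX) nX.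
have e0 : e' = 0.
  by apply/eqP; rewrite -leqn0; apply: (hasdim_sub hs h4 _ X O) he' he => z [].
rewrite e0 in he'.
have H3 := h3 1 A0 X 0 o hX he'.
suff: clos (clos X `\` X) o by move/H3; rewrite ltn0.
move=> U oU Uo; exists o; split => //; split.
  move=> U' oU' U'o.
  have [y [[U'y Oy] nFy]] := openn_infinite (U' `&` O) F o (openn_I _ _ _ oU' oO) (conj U'o Oo) fF.
  by exists y.
by case=> _; rewrite (tup1_eta o).
Qed.

Lemma openn_dim n (W : set ('I_n -> R)) : openn W -> definable Def W -> W !=set0 -> hasdim Def W n.
Proof.
move=> oW dW [w Ww].
have [e he] := hasdim_ex dW (ex_intro _ w Ww).
have en : e <= n by case: he => -[A [a [_ _ <-]]] _; apply: dimt_le_n.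
suff ne : n <= e.
  have E : e = n by apply/eqP; rewrite eqn_leq en ne.
  by rewrite E in he.
have [Ob [hOb sOb]] := oW w Ww.
have [k [Bs [DBs [oBs bBs]]]] := hb.
have /choice [b hbi] : forall i : 'I_n, exists b : 'I_k -> R,
    Bs (cat_t (fun _ => w i) b) /\ [set r' : R | Bs (cat_t (fun _ => r') b)] `<=` Ob i.
  by move=> i; case: (hOb i) => o1 x1; apply: bBs.
have [D [fD _ hD]] := Adef_fin _ _ _ dW.
pose A := D `|` \bigcup_(i in [set: 'I_n]) range (b i).
have fA : finite_set A.
  rewrite finite_setU; split => //; apply: bigcup_finite; first exact: finite_finset.
  by move=> i _; apply: finite_image; apply: finite_finset.
pose Bas i := [set x : 'I_1 -> R | Bs (cat_t (fun _ => x ord0) (b i))].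
have BasP : forall i, [/\ openn (Bas i), definable Def (Bas i) & Bas i !=set0].
  move=> i; split.
  - exact: (openn1 _ (oBs (b i))).
  - have h1 : Adef Def setT [set x | Bs (cat_t x (b i))].
      by apply: (Adef_fiber hs) => //; apply: (Adef_Def hs).
    by apply: Adef_ext h1 => x /=; rewrite /Bas /= -(tup1_eta x).
  - by exists (fun _ => w i); rewrite /Bas /=; case: (hbi i).
have build : forall m, m <= n -> exists L : seq R, [/\ size L = m,
    (forall i : 'I_n, i < m -> Bs (cat_t (fun _ => nth (w i) L i) (b i))) & @indep R Def A L].
  elim => [_|m IH lemn]; first by exists [::]; split => //; apply: indep_nil.
  have [L [sL hL iL]] := IH (ltnW lemn).
  have fAL : finite_set (A `|` lset L) by rewrite finite_setU; split => //; apply: finite_seq.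
  pose i0 := Ordinal lemn.
  have [o1 d1 n1] := BasP i0.
  have [x [Bx nx]] := G1 (Bas i0) _ o1 d1 n1 fAL.
  exists (rcons L (x ord0)); split.
  - by rewrite size_rcons sL.
  - move=> i; rewrite ltnS leq_eqVlt => /orP[/eqP ei|lti].
      rewrite nth_rcons sL ei ltnn eqxx.
      by have -> : i = i0 by apply: val_inj.
    by rewrite nth_rcons sL lti; apply: hL.
  - apply: (indep_perm _ (x ord0 :: L)); first by rewrite perm_sym perm_rcons.
    exact: indep_cons.
have [L [sL hL iL]] := build n (leqnn n).
pose q := fun i : 'I_n => nth (w i) L i.
have Wq : W q.
  apply: sOb => i; case: (hbi i) => _; apply; exact: hL.
have -> : n = size L by [].
apply: leq_trans (_ : dimt Def q A <= e); last first.
  by apply: he.2 => //; apply: Adef_mono hD => z Dz; left.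
apply: (dim_indep hs hg) => // x xL.
have il : index x L < n by rewrite -sL index_mem.
by exists (Ordinal il); rewrite /q /= nth_index.
Qed.

End OpenDim.

Section Lore.
Context {R : topologicalType}.
Context {Def : forall n, set (set ('I_n -> R))}.
Context {S : forall n, set (set ('I_n -> R))}.
Hypothesis hs : is_structure Def.
Hypothesis hl : lore Def S.

Lemma Sdef n X : S n X -> definable Def X. Proof. by case: hl => h _ _ _ _; apply: h. Qed.
Lemma S1 : S 1 setT. Proof. by case: hl => _ [] . Qed.
Lemma Sdiag : S 2 diag2. Proof. by case: hl => _ []. Qed.
Lemma SX m n X Y : S m X -> S n Y -> S (m + n) (setXt X Y). Proof. by case: hl => _ [] _ _ h _ _ _ _ _; apply: h. Qed.
Lemma SI n X Y : S n X -> S n Y -> S n (X `&` Y). Proof. by case: hl => _ [] _ _ _ h _ _ _ _; apply: h. Qed.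
Lemma Sperm n (s : {perm 'I_n}) X : S n X -> S n (perm_set s X). Proof. by case: hl => _ [] _ _ _ _ h _ _ _; apply: h. Qed.
Lemma Sii m n (X : set ('I_m -> R)) (Y : set ('I_n -> R)) f :
  homeo X Y f -> S m X -> S (m + n) (graph_on X f) -> S n Y.
Proof. by case: hl => _ _ h _ _; apply: h. Qed.
Lemma Siii n X U : S n X -> definable Def U -> ropen X U -> S n U.
Proof. by case: hl => _ _ _ [h _] _; apply: h. Qed.
Lemma Sext n (X Y : set ('I_n -> R)) : (forall x, X x <-> Y x) -> S n X -> S n Y.
Proof. by move=> /set_ext ->. Qed.

Lemma S0 : S 0 setT.
Proof.
case: hl => _ _ _ _ hiv.
have [X' [_ SX' _ hd]] := hiv 0 setT setT (Adef_T hs setT 0) (ex_intro _ (t0 R) I).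
have hT : hasdim Def (@setT ('I_0 -> R)) 0.
  split; last by move=> A a _ _; apply: dimt_le_n.
  by exists setT, (t0 R); split => //; [apply: Adef_T | apply/eqP; rewrite -leqn0; apply: dimt_le_n].
have X't : X' (t0 R).
  apply: contrapT => nX.
  have : (dimt Def (t0 R) setT < 0)%N.
    apply: (hd 0 hT) => //.
    by apply: (Adef_D hs); [apply: Adef_T | apply: Sdef].
  by rewrite ltn0.
apply: Sext SX' => x; split => // _.
by have -> : x = t0 R by apply: funext => i; case: (notF (ltn_ord i)).
Qed.

Lemma ST N : S N setT.
Proof.
elim: N => [|N IH]; first exact: S0.
apply: Sext (SX _ _ _ _ S1 IH) => x; split => // _.
by apply/setXtE.
Qed.

Lemma Seq N (p q : 'I_N) : S N [set z | z p = z q].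
Proof. exact: (P_eq _ S ST SX Sperm Sdiag). Qed.

Lemma SbigI N (I : finType) (F : I -> set ('I_N -> R)) :
  (forall i, S N (F i)) -> S N [set z | forall i, F i z].
Proof. exact: (P_bigI _ S ST SI). Qed.

Lemma S_graph_proj N M (T : set ('I_N -> R)) (h : 'I_M -> 'I_N) :
  S N T -> S (N + M) (graph_on T (fun z => fun i => z (h i))).
Proof.
move=> ST'.
have := SI _ _ _ (SX _ _ _ _ ST' (ST M))
  (SbigI _ _ (fun j => [set w : 'I_(N + M) -> R | w (lshift M (h j)) = w (rshift N j)]) (fun j => Seq _ _ _)).
apply: Sext => w; rewrite graphE; split.
  case=> /setXtE [Tw _] hj; split => //; apply: funext => j; exact: (esym (hj j)).
case=> Tw e; split; first by apply/setXtE.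
by move=> j /=; have := f_equal (fun f => f j) e; rewrite /rgt /lft /= => ->.
Qed.

Lemma S_image N M (T : set ('I_N -> R)) (G : set ('I_M -> R)) (h : 'I_M -> 'I_N) :
  S N T -> homeo T G (fun z => fun i => z (h i)) -> S M G.
Proof. by move=> ST' hom; apply: Sii hom ST' (S_graph_proj _ _ _ _ ST'). Qed.

Lemma S_pull N M (T : set ('I_N -> R)) (h : 'I_N -> 'I_M) :
  S N T -> S M [set z | T (fun i => z (h i))].
Proof.
move=> ST'.
pose P := [set w : 'I_(N + M) -> R | T (lft w) /\ forall i, w (lshift M i) = w (rshift N (h i))].
have SP : S _ P.
  apply: SI; first by apply: (Sext _ (setXt T setT)) (SX _ _ _ _ ST' (ST M)) => w; rewrite setXtE; split => [[]|].
  exact: (SbigI _ _ (fun i => [set w : 'I_(N + M) -> R | w (lshift M i) = w (rshift N (h i))]) (fun i => Seq _ _ _)).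
apply: (S_image _ _ P _ (fun j => rshift N j) SP).
split.
  move=> w [Tw e] /=; have <- : lft w = (fun i => w (rshift N (h i))) by apply: funext => i; exact: e.
  exact: Tw.
exists (fun z => cat_t (fun i => z (h i)) z); split.
- move=> z Tz; split; first by rewrite lft_cat.
  by move=> i; rewrite cat_tl cat_tr.
- move=> w [Tw e]; rewrite [RHS]cat_eta; congr cat_t.
  by apply: funext => i; rewrite /lft e.
- by move=> z _; apply: funext => j; rewrite cat_tr.
- exact: contin_coord.
- apply: contin_cat; first exact: contin_coord.
  by apply: (contin_ext _ _ _ id); [by [] | exact: contin_id].
Qed.

End Lore.

Section Main.
Context {R : topologicalType}.
Context {Def : forall n, set (set ('I_n -> R))}.
Context {S : forall n, set (set ('I_n -> R))}.
Hypothesis hs : is_structure Def.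
Hypothesis hg : geometric Def.
Hypothesis h3 : forall n A (X : set (tup R n)) d a, Adef Def A X -> hasdim Def X d ->
          clos (clos X `\` X) a -> (dimt Def a A < d)%N.
Hypothesis h4 : forall n (A B : set R) (X : set (tup R n)) d a, countable A -> countable B ->
          A `<=` B -> Adef Def A X -> hasdim Def X d -> X a -> dimt Def a A = d ->
          forall U, openn U -> U a -> exists b, [/\ U b, X b & dimt Def b B = d].
Hypothesis hH : hausdorff_space R.
Hypothesis hni : forall r : R, ~ open [set r].
Hypothesis hb : exists k (B : set (tup R (1 + k))), Def (1 + k) B /\
         (forall b : tup R k, open [set r : R | B (cat_t (fun _ => r) b)]) /\
         (forall (U : set R) r, open U -> U r -> exists b : tup R k,
             B (cat_t (fun _ => r) b) /\ [set r' : R | B (cat_t (fun _ => r') b)] `<=` U).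
Hypothesis hl : lore Def S.

Lemma ropen_sub n (X U : set ('I_n -> R)) : ropen X U -> U `<=` X.
Proof. by case=> O [_ ->] x []. Qed.

Lemma graph_swap_def p q (V : set ('I_p -> R)) (W : set ('I_q -> R)) phi psi :
  (forall x, V x -> W (phi x)) -> (forall y, W y -> V (psi y)) ->
  (forall x, V x -> psi (phi x) = x) -> (forall y, W y -> phi (psi y) = y) ->
  definable Def (graph_on V phi) -> definable Def (graph_on W psi).
Proof.
move=> VW WV pp pp' dG; apply: Adef_ext (Adef_swap hs _ _ _ _ dG) => w /=.
rewrite graph_cat graphE; split.
  by case=> Vr ->; split; [apply: VW|rewrite pp].
by case=> Wl ->; split; [apply: WV|rewrite pp'].
Qed.

Lemma lhomeo_defW p q (V : set ('I_p -> R)) (W : set ('I_q -> R)) phi :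
  loric_homeo S V W phi -> definable Def W.
Proof.
move=> [[_ Sg] [VW [psi [WV _ pp' _ _]]]].
apply: Adef_ext (Adef_exl hs _ _ _ _ (Sdef hl _ _ Sg)) => w; split.
  by case=> x /graph_cat [Vx ->]; apply: VW.
by move=> Ww; exists (psi w); apply/graph_cat; split; [apply: WV|rewrite pp'].
Qed.

Lemma lhomeo_dim p q (V : set ('I_p -> R)) (W : set ('I_q -> R)) phi d e :
  loric_homeo S V W phi -> hasdim Def V d -> hasdim Def W e -> d = e.
Proof.
move=> [[_ Sg] [VW [psi [WV pp pp' _ _]]]] hV hW.
have dG := Sdef hl _ _ Sg.
apply/eqP; rewrite eqn_leq; apply/andP; split.
  apply: (InvLe hs hg h4 _ _ V W phi) => // x x' Vx Vx' e1.
  by rewrite -(pp x Vx) e1 pp.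
apply: (InvLe hs hg h4 _ _ W V psi) => //.
  by move=> y y' Wy Wy' e1; rewrite -(pp' y Wy) e1 pp'.
exact: (graph_swap_def _ _ V W phi psi).
Qed.

Lemma chart_restrict k n (Y U : set ('I_k -> R)) u :
  definable Def U -> ropen Y U -> U u -> lman_pt Def S Y n u -> lman_pt Def S U n u.
Proof.
move=> dU [O2 [oO2 EU]] Uu [V [W [dV [O1 [oO1 EV]] Vu oW [phi [[cphi Sg] hom]]]]].
have hom' := hom; case: hom' => [VW [psi [WV pp pp' cphi' cpsi]]].
subst U V.
have [O'' [oO'' hO'']] := contin_preim _ _ W psi O2 cpsi oO2.
exists ((Y `&` O1) `&` (Y `&` O2)), (W `&` O''); split.
- exact: (Adef_I hs).
- exists O1; split => //; apply: set_ext => x; split; by [case=> -[] |case=> -[]].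
- by split.
- exact: openn_I.
- exists phi; split; [split|].
  + by apply: contin_sub cphi => x [].
  + apply: (Siii hl _ (graph_on (Y `&` O1) phi)) => //.
    * have h1 := Adef_pull hs _ _ _ (fun i => lshift n i) _ dU.
      apply: Adef_ext (Adef_I hs _ _ _ _ (Sdef hl _ _ Sg) h1) => w.
      split => [[/graphE [Vl e] Ul]|/graphE [[Vl Ul] e]].
        by apply/graphE; split.
      by split => //; apply/graphE.
    * exists [set w : 'I_(k + n) -> R | O2 (lft w)]; split; first exact: (openn_pull _ _ (fun i => lshift n i)).
      apply: set_ext => w; split => [/graphE [[[Yl O1l] [_ O2l]] e]|[/graphE [[Yl O1l] e] O2l]].
        by split => //; apply/graphE.
      by apply/graphE.
  + apply: (homeo_sub _ _ (Y `&` O1) _ W _ phi psi) => //.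
    * move=> x [Vx [Yx O2x]]; split; first exact: VW.
      by apply/(hO'' _ (VW _ Vx)); rewrite pp.
    * move=> w [Ww O''w]; split; first exact: WV.
      by split; [case: (WV _ Ww)|apply/(hO'' _ Ww)].
Qed.

Lemma part3 n k (Y U : set ('I_k -> R)) :
  loric_manifold Def S n Y -> definable Def U -> ropen Y U -> U !=set0 -> loric_manifold Def S n U.
Proof.
move=> [dY hY lY] dU rU [u Uu]; split => //; last first.
  by move=> u' Uu'; apply: (chart_restrict _ _ Y) => //; apply: lY; apply: (ropen_sub _ _ _ rU).
have [V' [W' [dV' rV' V'u oW' [phi lh]]]] := chart_restrict _ n Y U u dU rU Uu (lY u (ropen_sub _ _ _ rU _ Uu)).
have dW' := lhomeo_defW _ _ _ _ _ lh.
have nW' : W' !=set0 by exists (phi u); case: lh => _ [VW _]; apply: VW.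
have hW' := openn_dim hs hg h3 h4 hH hni hb _ W' oW' dW' nW'.
have [e he] := hasdim_ex dV' (ex_intro _ u V'u).
have en := lhomeo_dim _ _ _ _ _ _ _ lh he hW'; subst e.
have [eU heU] := hasdim_ex dU (ex_intro _ u Uu).
have -> : n = eU; last by [].
apply/eqP; rewrite eqn_leq; apply/andP; split.
  exact: (hasdim_sub hs h4 _ V' U _ _ (ropen_sub _ _ _ rV') he heU).
exact: (hasdim_sub hs h4 _ U Y _ _ (ropen_sub _ _ _ rU) heU hY).
Qed.

Lemma part2 n ka kb (X : set ('I_ka -> R)) (Y : set ('I_kb -> R)) :
  lorically_homeomorphic S X Y -> loric_manifold Def S n X -> loric_manifold Def S n Y.
Proof.
move=> [f lf] [dX hX lX].
have lf' := lf; case: lf' => -[cf Sg] [fXY [g [gYX gf fg cf' cg]]].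
have dG := Sdef hl _ _ Sg.
have dY : definable Def Y.
  apply: Adef_ext (Adef_exl hs _ _ _ _ dG) => y; split.
    by case=> x /graph_cat [Xx ->]; apply: fXY.
  by move=> Yy; exists (g y); apply/graph_cat; split; [apply: gYX|rewrite fg].
have [x0 X0] : X !=set0 by case: hX => -[A [a [_ Xa _]]] _; exists a.
have [e he] := hasdim_ex dY (ex_intro _ (f x0) (fXY _ X0)).
have ne := lhomeo_dim _ _ _ _ _ _ _ lf hX he; subst e.
split => // y Yy.
have [U [W [dU [O [oO EU]] Ux oW [phi [[cphi Sphi] [phiUW [psi [psiWU psiphi phipsi cphi2 cpsi]]]]]]]] :=
  lX (g y) (gYX _ Yy).
subst U.
have [O' [oO' hO']] := contin_preim _ _ Y g O cg oO.
pose U' := [set y' | Y y' /\ (X `&` O) (g y')].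
exists U', W; split => //.
- have h1 : Adef Def setT [set w : 'I_(ka + kb) -> R | (X `&` O) (lft w)] :=
    Adef_pull hs _ _ _ (fun i => lshift kb i) _ dU.
  apply: Adef_ext (Adef_exl hs _ _ _ _ (Adef_I hs _ _ _ _ h1 dG)) => y'; split.
    case=> x [Ux' /graph_cat [Xx ey]]; rewrite /U' ey; split; first exact: fXY.
    by rewrite gf //; move: Ux'; rewrite /= lft_cat.
  case=> Yy' Ug; exists (g y'); split; first by rewrite /= lft_cat.
  by apply/graph_cat; split; [apply: gYX|rewrite fg].
- exists O'; split => //; apply: set_ext => y'; split.
    by case=> Yy' [_ Og]; split => //; apply/hO'.
  by case=> Yy' O'y; split => //; split; [apply: gYX|apply/hO'].
exists (fun y' => phi (g y')); split; [split|].
- apply: (contin_comp _ _ _ U' (X `&` O)).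
  + by move=> y' [].
  + by apply: contin_sub cg => y' [].
  + exact: cphi.
- pose h : 'I_(kb + n) -> 'I_((ka + kb) + n) :=
    cat_t (fun j => lshift n (rshift ka j)) (fun l => rshift (ka + kb) l).
  pose T := [set w : 'I_((ka + kb) + n) -> R | graph_on X f (lft w) /\
     graph_on (X `&` O) phi (cat_t (lft (lft w)) (rgt w))].
  have ST' : S _ T.
    have s1 : S _ [set w : 'I_((ka + kb) + n) -> R | graph_on X f (lft w)] :=
      S_pull hs hl _ _ _ (fun i => lshift n i) Sg.
    have s2 : S _ [set w : 'I_((ka + kb) + n) -> R | graph_on (X `&` O) phi (cat_t (lft (lft w)) (rgt w))].
      have := S_pull hs hl _ _ _ (cat_t (fun i => lshift n (lshift kb i)) (fun l => rshift (ka + kb) l)) Sphi.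
      apply: Sext => w /=.
      have -> : (fun i => w (cat_t (fun i => lshift n (lshift kb i)) (fun l => rshift (ka + kb) l) i))
        = cat_t (lft (lft w)) (rgt w) by apply: comp_catE.
      by [].
    exact: (SI hl _ _ _ s1 s2).
  apply: (S_image hs hl _ _ T _ h ST').
  have ph : forall w : 'I_((ka + kb) + n) -> R, (fun i => w (h i)) = cat_t (rgt (lft w)) (rgt w).
    by move=> w; rewrite /h; apply: comp_catE.
  split.
    move=> w [/graphE [Xl el] /graph_cat [Ul ez]]; rewrite ph; apply/graph_cat.
    have gy : g (rgt (lft w)) = lft (lft w) by rewrite el gf.
    split; last by rewrite gy.
    by split; [rewrite el; apply: fXY|rewrite gy].
  exists (fun v => cat_t (cat_t (g (lft v)) (lft v)) (rgt v)); split.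
  + move=> v /graphE [[Yl Ugl] ev]; split.
      by rewrite lft_cat; apply/graph_cat; split; [apply: gYX|rewrite fg].
    by rewrite lft_cat lft_cat rgt_cat; apply/graph_cat; split.
  + move=> w [/graphE [Xl el] _]; rewrite ph lft_cat rgt_cat.
    have gy : g (rgt (lft w)) = lft (lft w) by rewrite el gf.
    by rewrite gy -!cat_eta.
  + by move=> v _; rewrite ph lft_cat !rgt_cat -cat_eta.
  + exact: contin_coord.
  + apply: contin_cat; last exact: contin_coord.
    apply: contin_cat; last exact: contin_coord.
    apply: (contin_comp _ _ _ _ Y (fun v => lft v) g); last exact: cg.
      by move=> v /graphE [[]].
    exact: contin_coord.
- split; first by move=> y' [Yy' Ug]; apply: phiUW.
  exists (fun w => f (psi w)); split.
  + move=> w Ww; have [Xp Op] := psiWU _ Ww; split; first exact: fXY.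
    by rewrite gf.
  + by move=> y' [Yy' Ug]; rewrite psiphi // fg.
  + by move=> w Ww; have [Xp Op] := psiWU _ Ww; rewrite gf // phipsi.
  + apply: (contin_comp _ _ _ U' (X `&` O)).
    * by move=> y' [].
    * by apply: contin_sub cg => y' [].
    * exact: cphi.
  + apply: (contin_comp _ _ _ W (X `&` O)) => //.
    by apply: contin_sub cf => x [].
Qed.

Lemma part1 m n ka kb (X : set ('I_ka -> R)) (Y : set ('I_kb -> R)) :
  loric_manifold Def S m X -> loric_manifold Def S n Y -> loric_manifold Def S (m + n) (setXt X Y).
Proof.
move=> [dX hX lX] [dY hY lY]; split.
- exact: (Adef_XT hs).
- exact: (hasdim_X hs hg h4).
move=> z /setXtE [Xz Yz].
have [U1 [W1 [dU1 [O1 [oO1 EU1]] U1x oW1 [phi1 [[c1 Sg1] [m1 [psi1 [p1 pp1 pp1' c1' d1']]]]]]]] := lX _ Xz.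
have [U2 [W2 [dU2 [O2 [oO2 EU2]] U2x oW2 [phi2 [[c2 Sg2] [m2 [psi2 [p2 pp2 pp2' c2' d2']]]]]]]] := lY _ Yz.
exists (setXt U1 U2), (setXt W1 W2); split.
- exact: (Adef_XT hs).
- exists ([set w : 'I_(ka + kb) -> R | O1 (lft w)] `&` [set w | O2 (rgt w)]); split.
    apply: openn_I; [exact: (openn_pull _ _ (fun i => lshift kb i)) | exact: (openn_pull _ _ (fun i => rshift ka i))].
  subst U1 U2; apply: set_ext => w; rewrite !setXtE; split.
    by case=> -[Xl O1l] [Yr O2r]; split => //; apply/setXtE.
  by case=> /setXtE [Xl Yr] [O1l O2r].
- by apply/setXtE.
- have -> : setXt W1 W2 = [set w : 'I_(m + n) -> R | W1 (lft w)] `&` [set w | W2 (rgt w)].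
    by apply: set_ext => w; rewrite setXtE.
  apply: openn_I; [exact: (openn_pull _ _ (fun i => lshift n i)) | exact: (openn_pull _ _ (fun i => rshift m i))].
exists (fun w => cat_t (phi1 (lft w)) (phi2 (rgt w))); split; [split|].
- apply: contin_cat.
    apply: (contin_comp _ _ _ _ U1 (fun w => lft w) phi1) => //; last exact: contin_coord.
    by move=> w /setXtE [].
  apply: (contin_comp _ _ _ _ U2 (fun w => rgt w) phi2) => //; last exact: contin_coord.
  by move=> w /setXtE [].
- pose h1 : 'I_(ka + m) -> 'I_((ka + kb) + (m + n)) :=
    cat_t (fun i => lshift (m + n) (lshift kb i)) (fun j => rshift (ka + kb) (lshift n j)).
  pose h2 : 'I_(kb + n) -> 'I_((ka + kb) + (m + n)) :=
    cat_t (fun i => lshift (m + n) (rshift ka i)) (fun j => rshift (ka + kb) (rshift m j)).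
  have s1 := S_pull hs hl _ _ _ h1 Sg1.
  have s2 := S_pull hs hl _ _ _ h2 Sg2.
  apply: Sext (SI hl _ _ _ s1 s2) => w.
  have e1 : (fun i => w (h1 i)) = cat_t (lft (lft w)) (lft (rgt w)) by rewrite /h1; apply: comp_catE.
  have e2 : (fun i => w (h2 i)) = cat_t (rgt (lft w)) (rgt (rgt w)) by rewrite /h2; apply: comp_catE.
  rewrite /= e1 e2 !graph_cat graphE setXtE; split.
    case=> -[U1l e1'] [U2r e2']; split => //.
    by rewrite (cat_eta (rgt w)) e1' e2'.
  case=> -[U1l U2r] e; rewrite e lft_cat rgt_cat.
  by [].
- split.
    by move=> w /setXtE [U1l U2r]; apply/setXt_cat; split; [apply: m1|apply: m2].
  exists (fun v => cat_t (psi1 (lft v)) (psi2 (rgt v))); split.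
  + by move=> v /setXtE [W1l W2r]; apply/setXt_cat; split; [apply: p1|apply: p2].
  + by move=> w /setXtE [U1l U2r]; rewrite lft_cat rgt_cat pp1 // pp2 // -cat_eta.
  + by move=> v /setXtE [W1l W2r]; rewrite lft_cat rgt_cat pp1' // pp2' // -cat_eta.
  + apply: contin_cat.
      apply: (contin_comp _ _ _ _ U1 (fun w => lft w) phi1) => //; last exact: contin_coord.
      by move=> w /setXtE [].
    apply: (contin_comp _ _ _ _ U2 (fun w => rgt w) phi2) => //; last exact: contin_coord.
    by move=> w /setXtE [].
  + apply: contin_cat.
      apply: (contin_comp _ _ _ _ W1 (fun w => lft w) psi1) => //; last exact: contin_coord.
      by move=> w /setXtE [].
    apply: (contin_comp _ _ _ _ W2 (fun w => rgt w) psi2) => //; last exact: contin_coord.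
    by move=> w /setXtE [].
Qed.

Theorem main_thm :
  (forall (m n ka kb : nat) (X : set ('I_ka -> R)) (Y : set ('I_kb -> R)),
      loric_manifold Def S m X -> loric_manifold Def S n Y ->
      loric_manifold Def S (m + n) (setXt X Y)) /\
  (forall (n ka kb : nat) (X : set ('I_ka -> R)) (Y : set ('I_kb -> R)),
      lorically_homeomorphic S X Y -> loric_manifold Def S n X ->
      loric_manifold Def S n Y) /\
  (forall (n k : nat) (Y U : set ('I_k -> R)),
      loric_manifold Def S n Y -> definable Def U -> ropen Y U -> U !=set0 ->
      loric_manifold Def S n U).
Proof.
split; first exact: part1.
split; first exact: part2.
exact: part3.
Qed.

End Main.

Theorem lemma2p19 (R : topologicalType) (Def : forall n, set (set ('I_n -> R)))
  (S : forall n, set (set ('I_n -> R)))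
  (htmin : t_minimal Def) (hlore : lore Def S) :
  (forall (m n ka kb : nat) (X : set ('I_ka -> R)) (Y : set ('I_kb -> R)),
      loric_manifold Def S m X -> loric_manifold Def S n Y ->
      loric_manifold Def S (m + n) (setXt X Y)) /\
  (forall (n ka kb : nat) (X : set ('I_ka -> R)) (Y : set ('I_kb -> R)),
      lorically_homeomorphic S X Y -> loric_manifold Def S n X ->
      loric_manifold Def S n Y) /\
  (forall (n k : nat) (Y U : set ('I_k -> R)),
      loric_manifold Def S n Y -> definable Def U -> ropen Y U -> U !=set0 ->
      loric_manifold Def S n U).
Proof.
case: htmin => [[[hs hH] [hg _] h3 h4 _] hb hni].
exact: (main_thm hs hg h3 h4 hH hni hb hlore).
Qed.
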